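(* Let $\mathbf{x}_1,\ldots,\mathbf{x}_n\in\mathbb{R}^p$, $\|\cdot\|$ a norm on $\mathbb{R}^p$ with dual norm $\|\cdot\|_\dagger$, $\gamma\ge0$, and $\mathcal{E}$ a set of $\varepsilon$ pairs $l=(l_1,l_2)$, $l_1<l_2$, with weights $w_l>0$. Let $\boldsymbol{\Phi}\in\mathbb{R}^{\varepsilon\times n}$ be the oriented edge–vertex incidence matrix ($\Phi_{l,l_1}=1$, $\Phi_{l,l_2}=-1$, other entries $0$), $\mathbf{A}=\boldsymbol{\Phi}\otimes\mathbf{I}_p$ (so that $\mathbf{A}\,\mathrm{vec}(\mathbf{U})$ stacks the differences $\mathbf{u}_{l_1}-\mathbf{u}_{l_2}$), and $\mathbf{L}=\boldsymbol{\Phi}^t\boldsymbol{\Phi}$ the graph Laplacian. Then $\mathbf{A}^t\mathbf{A}=\mathbf{L}\otimes\mathbf{I}_p$ and $\rho(\mathbf{A}^t\mathbf{A})=\rho(\mathbf{L})$, the largest eigenvalue of $\mathbf{L}$. Consequently, if $0<\nu<2/\rho(\mathbf{L})$ and $\boldsymbol{\lambda}^0_l\in\mathbb{R}^p$ are arbitrary, the AMA iterates $$\boldsymbol{\Delta}^m_i=\sum_{l:l_1=i}\boldsymbol{\lambda}^{m-1}_l-\sum_{l:l_2=i}\boldsymbol{\lambda}^{m-1}_l,\quad \mathbf{u}^m_i=\mathbf{x}_i+\boldsymbol{\Delta}^m_i,\quad \mathbf{g}^m_l=\mathbf{u}^m_{l_1}-\mathbf{u}^m_{l_2},\quad \boldsymbol{\lambda}^m_l=\mathcal{P}_{C_l}(\boldsymbol{\lambda}^{m-1}_l-\nu\mathbf{g}^m_l)$$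 satisfy $\mathbf{U}^m\to\mathbf{U}^*$, the unique minimizer of $F_\gamma(\mathbf{U})=\frac12\sum_i\|\mathbf{x}_i-\mathbf{u}_i\|_2^2+\gamma\sum_{l\in\mathcal{E}}w_l\|\mathbf{u}_{l_1}-\mathbf{u}_{l_2}\|$, and $\boldsymbol{\Lambda}^m$ converges to an optimal dual multiplier $\boldsymbol{\Lambda}^*$.
   Context: $C_l=\{\boldsymbol{\lambda}\in\mathbb{R}^p:\|\boldsymbol{\lambda}\|_\dagger\le\gamma w_l\}$ and $\mathcal{P}_C$ is Euclidean projection onto $C$. $\mathbf{U}=(\mathbf{u}_1,\dots,\mathbf{u}_n)\in\mathbb{R}^{p\times n}$ and $\mathrm{vec}$ stacks columns. The dual multipliers refer to the constraint $\mathbf{u}_{l_1}-\mathbf{u}_{l_2}-\mathbf{v}_l=\mathbf{0}$, $l\in\mathcal{E}$, in the reformulated problem: minimize $\frac12\sum_i\|\mathbf{x}_i-\mathbf{u}_i\|_2^2+\gamma\sum_{l}w_l\|\mathbf{v}_l\|$ subject to these constraints. *)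

(* Defs.v *)
From Stdlib Require Import Reals Lra Lia List Arith ClassicalEpsilon.
Open Scope R_scope.

(* Vectors of R^d are functions nat -> R; only coordinates k < d matter.
   All indices are 0-based. *)

Fixpoint fsum (m : nat) (f : nat -> R) : R :=
  match m with O => 0 | S m' => fsum m' f + f m' end.

Definition dot (d : nat) (u v : nat -> R) : R := fsum d (fun k => u k * v k).
Definition sqdist (d : nat) (u v : nat -> R) : R := fsum d (fun k => (u k - v k) ^ 2).

Definition is_norm (p : nat) (N : (nat -> R) -> R) : Prop :=
  (forall v w, (forall k, (k < p)%nat -> v k = w k) -> N v = N w) /\
  (forall v, 0 <= N v) /\
  (forall v, N v = 0 -> forall k, (k < p)%nat -> v k = 0) /\
  (forall c v, N (fun k => c * v k) = Rabs c * N v) /\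
  (forall v w, N (fun k => v k + w k) <= N v + N w).

Definition dual_norm (p : nat) (N : (nat -> R) -> R) (lam : nat -> R) : R :=
  epsilon (inhabits 0%R)
    (fun s => is_lub (fun t => exists v, N v <= 1 /\ t = dot p lam v) s).

Definition C_set (p : nat) (N : (nat -> R) -> R) (gamma wl : R) (lam : nat -> R) : Prop :=
  dual_norm p N lam <= gamma * wl.

Definition proj (p : nat) (C : (nat -> R) -> Prop) (y : nat -> R) : nat -> R :=
  epsilon (inhabits (fun _ : nat => 0%R))
    (fun z => C z /\ forall w, C w -> sqdist p y z <= sqdist p y w).

Definition edge (E : list (nat * nat)) (l : nat) : nat * nat := nth l E (0%nat, 0%nat).

Definition kdelta (a b : nat) : R := if Nat.eqb a b then 1 else 0.

Definition Phi (E : list (nat * nat)) (l i : nat) : R :=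
  if Nat.eqb i (fst (edge E l)) then 1
  else if Nat.eqb i (snd (edge E l)) then (-1) else 0.

Definition Lap (E : list (nat * nat)) (i j : nat) : R :=
  fsum (length E) (fun l => Phi E l i * Phi E l j).

(* A = Phi (x) I_p, (eps*p) x (n*p), with row index l*p+k and column index
   i*p+k' (vec stacks the columns u_i of U). *)
Definition Amat (p : nat) (E : list (nat * nat)) (a b : nat) : R :=
  Phi E (a / p) (b / p) * kdelta (a mod p) (b mod p).

Definition AtA (p : nat) (E : list (nat * nat)) (a b : nat) : R :=
  fsum (length E * p) (fun c => Amat p E c a * Amat p E c b).

Definition LkronI (p : nat) (E : list (nat * nat)) (a b : nat) : R :=
  Lap E (a / p) (b / p) * kdelta (a mod p) (b mod p).

Definition is_eigenvalue (d : nat) (M : nat -> nat -> R) (mu : R) : Prop :=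
  exists v : nat -> R, (exists k, (k < d)%nat /\ v k <> 0) /\
    forall i, (i < d)%nat -> fsum d (fun j => M i j * v j) = mu * v i.

Definition is_largest_eigenvalue (d : nat) (M : nat -> nat -> R) (r : R) : Prop :=
  is_eigenvalue d M r /\ forall mu, is_eigenvalue d M mu -> mu <= r.

(* Lam : nat -> nat -> R, Lam l k = k-th coordinate of lambda_l *)
Definition ama_Delta (E : list (nat * nat)) (Lam : nat -> nat -> R) (i k : nat) : R :=
  fsum (length E) (fun l => if Nat.eqb (fst (edge E l)) i then Lam l k else 0)
  - fsum (length E) (fun l => if Nat.eqb (snd (edge E l)) i then Lam l k else 0).

Definition ama_u (x : nat -> nat -> R) (E : list (nat * nat)) (Lam : nat -> nat -> R)
  (i k : nat) : R := x i k + ama_Delta E Lam i k.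

Definition ama_g (x : nat -> nat -> R) (E : list (nat * nat)) (Lam : nat -> nat -> R)
  (l k : nat) : R :=
  ama_u x E Lam (fst (edge E l)) k - ama_u x E Lam (snd (edge E l)) k.

Definition ama_step (p : nat) (N : (nat -> R) -> R) (gamma : R) (w : nat -> R)
  (x : nat -> nat -> R) (E : list (nat * nat)) (nu : R) (Lam : nat -> nat -> R)
  : nat -> nat -> R :=
  fun l => proj p (C_set p N gamma (w l)) (fun k => Lam l k - nu * ama_g x E Lam l k).

Fixpoint ama_lam (p : nat) (N : (nat -> R) -> R) (gamma : R) (w : nat -> R)
  (x : nat -> nat -> R) (E : list (nat * nat)) (nu : R) (lam0 : nat -> nat -> R)
  (m : nat) : nat -> nat -> R :=
  match m with
  | O => lam0
  | S m' => ama_step p N gamma w x E nu (ama_lam p N gamma w x E nu lam0 m')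
  end.

(* U^{m+1} = u(lambda^m) *)
Definition ama_U (p : nat) (N : (nat -> R) -> R) (gamma : R) (w : nat -> R)
  (x : nat -> nat -> R) (E : list (nat * nat)) (nu : R) (lam0 : nat -> nat -> R)
  (m : nat) : nat -> nat -> R :=
  ama_u x E (ama_lam p N gamma w x E nu lam0 m).

(* U i k = k-th coordinate of u_i *)
Definition Fgamma (p n : nat) (N : (nat -> R) -> R) (gamma : R) (w : nat -> R)
  (x : nat -> nat -> R) (E : list (nat * nat)) (U : nat -> nat -> R) : R :=
  / 2 * fsum n (fun i => sqdist p (x i) (U i))
  + gamma * fsum (length E) (fun l =>
      w l * N (fun k => U (fst (edge E l)) k - U (snd (edge E l)) k)).

Definition is_minimizer (p n : nat) (N : (nat -> R) -> R) (gamma : R) (w : nat -> R)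
  (x : nat -> nat -> R) (E : list (nat * nat)) (U : nat -> nat -> R) : Prop :=
  forall U', Fgamma p n N gamma w x E U <= Fgamma p n N gamma w x E U'.

(* Lagrangian of: min 1/2 sum ||x_i-u_i||^2 + gamma sum w_l ||v_l||
   s.t. u_{l1} - u_{l2} - v_l = 0 *)
Definition Lagrangian (p n : nat) (N : (nat -> R) -> R) (gamma : R) (w : nat -> R)
  (x : nat -> nat -> R) (E : list (nat * nat))
  (U V Lam : nat -> nat -> R) : R :=
  / 2 * fsum n (fun i => sqdist p (x i) (U i))
  + gamma * fsum (length E) (fun l => w l * N (V l))
  + fsum (length E) (fun l =>
      dot p (Lam l) (fun k => V l k - (U (fst (edge E l)) k - U (snd (edge E l)) k))).

(* Lam is an optimal dual multiplier (Lagrange multiplier): the dual function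
   inf_{U,V} Lagrangian(U,V,Lam) attains the primal optimal value
   (>= suffices, <= is weak duality). *)
Definition is_opt_dual (p n : nat) (N : (nat -> R) -> R) (gamma : R) (w : nat -> R)
  (x : nat -> nat -> R) (E : list (nat * nat)) (Lam : nat -> nat -> R) : Prop :=
  forall U0, is_minimizer p n N gamma w x E U0 ->
  forall U V, Fgamma p n N gamma w x E U0 <= Lagrangian p n N gamma w x E U V Lam.

(* Main.v *)
Require Import Defs.
From Stdlib Require Import Reals Lra Lia List Arith ClassicalEpsilon ZArith.
Open Scope R_scope.

Lemma fsum_ext d f g : (forall k, (k < d)%nat -> f k = g k) -> fsum d f = fsum d g.
Proof. induction d; simpl; intros H; auto. rewrite IHd by (intros; apply H; lia). rewrite H by lia. auto. Qed.

Lemma fsum_plus d f g : fsum d (fun k => f k + g k) = fsum d f + fsum d g.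
Proof. induction d; simpl; [lra|]. rewrite IHd. lra. Qed.

Lemma fsum_minus d f g : fsum d (fun k => f k - g k) = fsum d f - fsum d g.
Proof. induction d; simpl; [lra|]. rewrite IHd. lra. Qed.

Lemma fsum_scal d c f : fsum d (fun k => c * f k) = c * fsum d f.
Proof. induction d; simpl; [lra|]. rewrite IHd. lra. Qed.

Lemma fsum_zero d : fsum d (fun _ => 0) = 0.
Proof. induction d; simpl; [lra|]. rewrite IHd. lra. Qed.

Lemma fsum_le d f g : (forall k, (k < d)%nat -> f k <= g k) -> fsum d f <= fsum d g.
Proof. induction d; simpl; intros H; [lra|]. assert (f d <= g d) by (apply H; lia).
  assert (fsum d f <= fsum d g) by (apply IHd; intros; apply H; lia). lra. Qed.

Lemma fsum_nonneg d f : (forall k, (k < d)%nat -> 0 <= f k) -> 0 <= fsum d f.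
Proof. intros H. rewrite <- (fsum_zero d). apply fsum_le. auto. Qed.

Lemma fsum_term_le d f j : (forall k, (k < d)%nat -> 0 <= f k) -> (j < d)%nat -> f j <= fsum d f.
Proof. induction d; simpl; intros H Hj; [lia|].
  assert (0 <= fsum d f) by (apply fsum_nonneg; intros; apply H; lia).
  destruct (Nat.eq_dec j d). subst; lra.
  assert (f j <= fsum d f) by (apply IHd; [intros; apply H; lia | lia]).
  assert (0 <= f d) by (apply H; lia). lra. Qed.

Lemma fsum_swap a b (f : nat -> nat -> R) :
  fsum a (fun i => fsum b (fun j => f i j)) = fsum b (fun j => fsum a (fun i => f i j)).
Proof. induction a; simpl. rewrite fsum_zero; auto.
  rewrite IHa. rewrite <- fsum_plus. auto. Qed.

Lemma fsum_add a b f : fsum (a + b) f = fsum a f + fsum b (fun k => f (a + k)%nat).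
Proof. induction b; simpl. rewrite Nat.add_0_r; lra.
  rewrite Nat.add_succ_r. simpl. rewrite IHb. lra. Qed.

Lemma fsum_split m p f : fsum (m * p) f = fsum m (fun l => fsum p (fun k => f (l * p + k)%nat)).
Proof. induction m; simpl. auto. rewrite Nat.add_comm, fsum_add, IHm. auto. Qed.

Lemma kdelta_same a : kdelta a a = 1.
Proof. unfold kdelta. rewrite Nat.eqb_refl. auto. Qed.
Lemma kdelta_diff a b : a <> b -> kdelta a b = 0.
Proof. intros. unfold kdelta. destruct (Nat.eqb_spec a b); auto; lia. Qed.
Lemma kdelta_sym a b : kdelta a b = kdelta b a.
Proof. unfold kdelta. destruct (Nat.eqb_spec a b), (Nat.eqb_spec b a); auto; lia. Qed.

Lemma fsum_delta d a f : (a < d)%nat -> fsum d (fun k => kdelta k a * f k) = f a.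
Proof. induction d; simpl; intros H; [lia|].
  destruct (Nat.eq_dec a d).
  - subst. rewrite kdelta_same. rewrite (fsum_ext _ _ (fun _ => 0)). rewrite fsum_zero. lra.
    intros; rewrite kdelta_diff by lia; lra.
  - rewrite IHd by lia. rewrite kdelta_diff by lia. lra. Qed.

Lemma fsum_delta' d a f : (a < d)%nat -> fsum d (fun k => f k * kdelta k a) = f a.
Proof. intros. rewrite <- (fsum_delta d a f) by auto. apply fsum_ext; intros; lra. Qed.

Lemma fsum_nonneg_zero d f : (forall k, (k < d)%nat -> 0 <= f k) -> fsum d f <= 0 ->
  forall k, (k < d)%nat -> f k = 0.
Proof. intros H H0 k Hk. pose proof (fsum_term_le d f k H Hk). pose proof (H k Hk). lra. Qed.

Lemma Rabs_le_bt x a : Rabs x <= a -> -a <= x <= a.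
Proof. unfold Rabs. destruct (Rcase_abs x); lra. Qed.

Lemma CV_const c : Un_cv (fun _ => c) c.
Proof. intros e He. exists 0%nat. intros. unfold Rdist. replace (c - c) with 0 by ring. rewrite Rabs_R0. auto. Qed.

Lemma CV_fsum d (a : nat -> nat -> R) (b : nat -> R) :
  (forall k, (k < d)%nat -> Un_cv (fun m => a m k) (b k)) ->
  Un_cv (fun m => fsum d (a m)) (fsum d b).
Proof. induction d; simpl; intros H. apply CV_const.
  apply CV_plus. apply IHd; intros; apply H; lia. apply H; lia. Qed.

Lemma CV_ext u v l : (forall m, u m = v m) -> Un_cv u l -> Un_cv v l.
Proof. intros H C e He. destruct (C e He) as [N HN]. exists N. intros. rewrite <- H. auto. Qed.

Lemma CV_scal c u l : Un_cv u l -> Un_cv (fun m => c * u m) (c * l).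
Proof. intros. apply CV_mult; auto. apply CV_const. Qed.

Lemma incr_ge (phi : nat -> nat) : (forall m, (phi m < phi (S m))%nat) -> forall m, (m <= phi m)%nat.
Proof. intros H m. induction m. lia. specialize (H m). lia. Qed.

Lemma incr_mono (phi : nat -> nat) : (forall m, (phi m < phi (S m))%nat) -> forall a b, (a <= b)%nat -> (phi a <= phi b)%nat.
Proof. intros H a b Hab. induction Hab. lia. specialize (H m). lia. Qed.

Lemma CV_subseq u l (phi : nat -> nat) : (forall m, (phi m < phi (S m))%nat) ->
  Un_cv u l -> Un_cv (fun m => u (phi m)) l.
Proof. intros Hp C e He. destruct (C e He) as [N HN]. exists N. intros m Hm.
  apply HN. pose proof (incr_ge phi Hp m). lia. Qed.

Lemma CV_le_const u l c : Un_cv u l -> (forall m, u m <= c) -> l <= c.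
Proof. intros C H. destruct (Rle_dec l c); auto. exfalso.
  destruct (C (l - c)) as [N HN]. lra. specialize (HN N (le_n _)). specialize (H N).
  unfold Rdist in HN. apply Rabs_def2 in HN. lra. Qed.

Lemma CV_ge_const u l c : Un_cv u l -> (forall m, c <= u m) -> c <= l.
Proof. intros C H. destruct (Rle_dec c l); auto. exfalso.
  destruct (C (c - l)) as [N HN]. lra. specialize (HN N (le_n _)). specialize (H N).
  unfold Rdist in HN. apply Rabs_def2 in HN. lra. Qed.

Lemma CV_unique u l1 l2 : Un_cv u l1 -> Un_cv u l2 -> l1 = l2.
Proof. intros. eapply UL_sequence; eauto. Qed.

Lemma BW1 (u : nat -> R) (R0 : R) : (forall m, Rabs (u m) <= R0) ->
  exists phi : nat -> nat, (forall m, (phi m < phi (S m))%nat) /\ exists l, Un_cv (fun m => u (phi m)) l.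
Proof.
  intros Hb.
  destruct (Bolzano_Weierstrass u (fun c => -R0 <= c <= R0)) as [l Hl].
  apply compact_P3. intros m. specialize (Hb m). apply Rabs_le_bt in Hb. lra.
  assert (H : forall N m : nat, exists q, (N <= q)%nat /\ Rabs (u q - l) < / (INR m + 1)).
  { intros N m. assert (Hp : 0 < / (INR m + 1)). { apply Rinv_0_lt_compat. pose proof (pos_INR m). lra. }
    destruct (Hl (fun y => Rabs (y - l) < / (INR m + 1)) N) as [q Hq].
    exists (mkposreal _ Hp). intros y Hy. unfold disc in Hy. simpl in Hy. auto.
    exists q; auto. }
  pose (pick := fun N m => proj1_sig (constructive_indefinite_description _ (H N m))).
  assert (Hpick : forall N m, (N <= pick N m)%nat /\ Rabs (u (pick N m) - l) < / (INR m + 1)).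
  { intros. unfold pick. destruct (constructive_indefinite_description _ (H N m)). simpl. auto. }
  pose (phi := fix phi (m : nat) : nat := match m with O => pick O O | S m' => pick (S (phi m')) (S m') end).
  exists phi. split.
  - intros m. simpl. destruct (Hpick (S (phi m)) (S m)). lia.
  - exists l. intros e He.
    destruct (archimed (/ e)) as [Ha _].
    assert (Hz : (0 <= up (/e))%Z). { apply le_IZR. pose proof (Rinv_0_lt_compat e He). lra. }
    exists (Z.to_nat (up (/ e))). intros m Hm. unfold Rdist.
    assert (Hphi : Rabs (u (phi m) - l) < / (INR m + 1)).
    { destruct m; simpl; apply Hpick. }
    eapply Rlt_le_trans. apply Hphi.
    assert (INR (Z.to_nat (up (/ e))) <= INR m) by (apply le_INR; auto).
    rewrite INR_IZR_INZ, Z2Nat.id in H0 by auto.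
    assert (/ e < INR m + 1) by lra.
    rewrite <- (Rinv_inv e). apply Rinv_le_contravar. apply Rinv_0_lt_compat; auto. lra.
Qed.

Lemma BWd d (u : nat -> nat -> R) (Rb : nat -> R) :
  (forall m j, (j < d)%nat -> Rabs (u m j) <= Rb j) ->
  exists phi : nat -> nat, (forall m, (phi m < phi (S m))%nat) /\
    exists v : nat -> R, forall j, (j < d)%nat -> Un_cv (fun m => u (phi m) j) (v j).
Proof.
  induction d; intros Hb.
  - exists (fun m => m). split. intros; lia. exists (fun _ => 0). intros; lia.
  - destruct IHd as [phi1 [Hphi1 [v1 Hv1]]]. intros; apply Hb; lia.
    destruct (BW1 (fun m => u (phi1 m) d) (Rb d)) as [phi2 [Hphi2 [l Hl]]].
    intros; apply Hb; lia.
    exists (fun m => phi1 (phi2 m)). split.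
    + intros m. specialize (Hphi2 m). pose proof (incr_mono phi1 Hphi1 (S (phi2 m)) (phi2 (S m)) Hphi2).
      specialize (Hphi1 (phi2 m)). lia.
    + exists (fun j => if Nat.eqb j d then l else v1 j). intros j Hj.
      destruct (Nat.eqb_spec j d). subst. auto.
      apply (CV_subseq (fun m => u (phi1 m) j)). auto. apply Hv1. lia.
Qed.

Lemma arch_inv e : 0 < e -> exists N, forall m, (N <= m)%nat -> / (INR m + 1) < e.
Proof. intros He. destruct (archimed (/ e)) as [Ha _].
  assert (Hz : (0 <= up (/e))%Z). { apply le_IZR. pose proof (Rinv_0_lt_compat e He). lra. }
  exists (Z.to_nat (up (/ e))). intros m Hm.
  assert (INR (Z.to_nat (up (/ e))) <= INR m) by (apply le_INR; auto).
  rewrite INR_IZR_INZ, Z2Nat.id in H by auto.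
  assert (/ e < INR m + 1) by lra.
  rewrite <- (Rinv_inv e). apply Rinv_lt_contravar. pose proof (pos_INR m). apply Rmult_lt_0_compat. apply Rinv_0_lt_compat; auto. lra. lra.
Qed.

Lemma argmax d (S : (nat -> R) -> Prop) (f : (nat -> R) -> R) (Rb : nat -> R) (Bd : R) :
  (exists v, S v) ->
  (forall v, S v -> forall k, (k < d)%nat -> Rabs (v k) <= Rb k) ->
  (forall (vs : nat -> nat -> R) v, (forall m, S (vs m)) ->
     (forall k, (k < d)%nat -> Un_cv (fun m => vs m k) (v k)) ->
     S v /\ Un_cv (fun m => f (vs m)) (f v)) ->
  (forall v, S v -> f v <= Bd) ->
  exists z, S z /\ forall w, S w -> f w <= f z.
Proof.
  intros [v0 Hv0] Hb Hc Hub.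
  destruct (completeness (fun t => exists w, S w /\ t = f w)) as [M [HM1 HM2]].
  { exists Bd. intros t [w [Hw ->]]. auto. }
  { exists (f v0). eauto. }
  assert (H : forall m : nat, exists w, S w /\ M - / (INR m + 1) < f w).
  { intros m. apply NNPP. intros Hn. assert (Hp : 0 < / (INR m + 1)).
    { apply Rinv_0_lt_compat. pose proof (pos_INR m). lra. }
    assert (M <= M - / (INR m + 1)). { apply HM2. intros t [w [Hw ->]].
      destruct (Rle_dec (f w) (M - / (INR m + 1))); auto. exfalso; apply Hn. exists w. split; auto. lra. }
    lra. }
  pose (ws := fun m => proj1_sig (constructive_indefinite_description _ (H m))).
  assert (Hws : forall m, S (ws m) /\ M - / (INR m + 1) < f (ws m)).
  { intros. unfold ws. destruct (constructive_indefinite_description _ (H m)). simpl. auto. }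
  destruct (BWd d ws Rb) as [phi [Hphi [v Hv]]]. { intros; apply Hb; auto. apply Hws. }
  destruct (Hc (fun m => ws (phi m)) v) as [HSv Hfv]. intros; apply Hws. auto.
  exists v. split; auto.
  assert (HfM : f v = M).
  { apply Rle_antisym.
    - apply (CV_le_const _ _ M Hfv). intros m. apply HM1. exists (ws (phi m)). split; auto. apply Hws.
    - destruct (Rle_dec M (f v)); auto. exfalso.
      destruct (arch_inv ((M - f v)/2)) as [N0 HN0]. lra.
      destruct (Hfv ((M - f v)/2)) as [N1 HN1]. lra.
      set (m := Nat.max N0 N1).
      specialize (HN1 m ltac:(lia)). unfold Rdist in HN1. apply Rabs_def2 in HN1.
      destruct (Hws (phi m)) as [_ Hl].
      specialize (HN0 (phi m)). pose proof (incr_ge phi Hphi m). specialize (HN0 ltac:(lia)).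
      lra. }
  intros w Hw. rewrite HfM. apply HM1. eauto.
Qed.

Definition sq (d : nat) (v : nat -> R) : R := fsum d (fun k => v k ^ 2).

Lemma sq_nonneg d v : 0 <= sq d v.
Proof. apply fsum_nonneg. intros; apply pow2_ge_0. Qed.

Lemma abs_le_sqrt x s : x ^ 2 <= s -> Rabs x <= sqrt s.
Proof. intros H. rewrite <- sqrt_Rsqr_abs. apply sqrt_le_1_alt. unfold Rsqr. lra. Qed.

Lemma coord_le_sqrt d v k : (k < d)%nat -> Rabs (v k) <= sqrt (sq d v).
Proof. intros. apply abs_le_sqrt. apply (fsum_term_le d (fun k => v k ^ 2)); auto. intros; apply pow2_ge_0. Qed.

Lemma sq_zero d v : sq d v <= 0 -> forall k, (k < d)%nat -> v k = 0.
Proof. intros H k Hk. pose proof (fsum_nonneg_zero d (fun k => v k ^2) (fun k _ => pow2_ge_0 (v k)) H k Hk).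
  simpl in H0. nra. Qed.

Lemma Rabs_squeeze (a b : nat -> R) l : (forall m, Rabs (a m - l) <= b m) -> Un_cv b 0 -> Un_cv a l.
Proof. intros H C e He. destruct (C e He) as [N HN]. exists N. intros m Hm. specialize (HN m Hm).
  unfold Rdist in *. specialize (H m). rewrite Rminus_0_r in HN. pose proof (Rle_abs (b m)). lra. Qed.

Lemma CV_abs0 u l : Un_cv u l -> Un_cv (fun m => Rabs (u m - l)) 0.
Proof. intros C e He. destruct (C e He) as [N HN]. exists N. intros. unfold Rdist in *.
  rewrite Rminus_0_r, Rabs_Rabsolu. auto. Qed.

Lemma CV_sq d (vs : nat -> nat -> R) v : (forall k, (k < d)%nat -> Un_cv (fun m => vs m k) (v k)) ->
  Un_cv (fun m => sq d (vs m)) (sq d v).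
Proof. intros. unfold sq. apply (CV_fsum d (fun m k => vs m k ^ 2)). intros. simpl.
  apply CV_mult; auto. apply CV_mult; auto. apply CV_const. Qed.

Lemma CV_dot d (vs ws : nat -> nat -> R) v w : (forall k, (k < d)%nat -> Un_cv (fun m => vs m k) (v k)) ->
  (forall k, (k < d)%nat -> Un_cv (fun m => ws m k) (w k)) ->
  Un_cv (fun m => dot d (vs m) (ws m)) (dot d v w).
Proof. intros. unfold dot. apply (CV_fsum d (fun m k => vs m k * ws m k)). intros.
  apply CV_mult; auto. Qed.

Lemma dot_sym d a b : dot d a b = dot d b a.
Proof. unfold dot. apply fsum_ext; intros; lra. Qed.
Lemma dot_ext d a b a' b' : (forall k, (k < d)%nat -> a k = a' k) -> (forall k, (k < d)%nat -> b k = b' k) ->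
  dot d a b = dot d a' b'.
Proof. intros. unfold dot. apply fsum_ext; intros. rewrite H, H0 by auto. auto. Qed.
Lemma dot_self d a : dot d a a = sq d a.
Proof. unfold dot, sq. apply fsum_ext; intros; simpl; lra. Qed.
Lemma dot_zero_l d b : dot d (fun _ => 0) b = 0.
Proof. unfold dot. rewrite (fsum_ext _ _ (fun _ => 0)). apply fsum_zero. intros; lra. Qed.
Lemma dot_lin_l d a a' b c : dot d (fun k => a k + c * a' k) b = dot d a b + c * dot d a' b.
Proof. unfold dot. rewrite <- fsum_scal, <- fsum_plus. apply fsum_ext; intros; lra. Qed.
Lemma dot_scal_l d c a b : dot d (fun k => c * a k) b = c * dot d a b.
Proof. unfold dot. rewrite <- fsum_scal. apply fsum_ext; intros; lra. Qed.
Lemma dot_scal_r d c a b : dot d a (fun k => c * b k) = c * dot d a b.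
Proof. unfold dot. rewrite <- fsum_scal. apply fsum_ext; intros; lra. Qed.
Lemma dot_minus_l d a a' b : dot d (fun k => a k - a' k) b = dot d a b - dot d a' b.
Proof. unfold dot. rewrite <- fsum_minus. apply fsum_ext; intros; lra. Qed.
Lemma dot_minus_r d a b b' : dot d a (fun k => b k - b' k) = dot d a b - dot d a b'.
Proof. unfold dot. rewrite <- fsum_minus. apply fsum_ext; intros; lra. Qed.
Lemma dot_plus_r d a b b' : dot d a (fun k => b k + b' k) = dot d a b + dot d a b'.
Proof. unfold dot. rewrite <- fsum_plus. apply fsum_ext; intros; lra. Qed.
Lemma dot_opp_r d a b : dot d a (fun k => - b k) = - dot d a b.
Proof. replace (- dot d a b) with (-1 * dot d a b) by ring. rewrite <- dot_scal_r.
  apply dot_ext; intros; lra. Qed.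

Lemma sqdist_sq d a b : sqdist d a b = sq d (fun k => a k - b k).
Proof. auto. Qed.

Lemma sq_comb d a b s : sq d (fun k => a k - s * b k) = sq d a - 2 * s * dot d a b + s ^ 2 * sq d b.
Proof. unfold sq, dot. rewrite <- !fsum_scal. rewrite <- fsum_minus, <- fsum_plus. apply fsum_ext; intros; ring. Qed.

Lemma CS d a b : (dot d a b) ^ 2 <= sq d a * sq d b.
Proof.
  pose proof (sq_nonneg d b). destruct (Req_dec (sq d b) 0) as [H0|H0].
  - assert (forall k, (k < d)%nat -> b k = 0) by (apply sq_zero; lra).
    rewrite (dot_ext d a b a (fun _ => 0)) by auto. rewrite dot_sym, dot_zero_l. rewrite H0. lra.
  - pose proof (sq_nonneg d (fun k => a k - (dot d a b / sq d b) * b k)). rewrite sq_comb in H1.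
    assert (0 <= sq d a * sq d b - dot d a b ^ 2).
    { replace (sq d a * sq d b - dot d a b ^ 2) with
        (sq d b * (sq d a - 2 * (dot d a b / sq d b) * dot d a b + (dot d a b / sq d b) ^ 2 * sq d b)) by (field; auto).
      apply Rmult_le_pos; lra. }
    lra.
Qed.

Lemma N_ext p N (HN : is_norm p N) v w : (forall k, (k < p)%nat -> v k = w k) -> N v = N w.
Proof. destruct HN as [H _]. apply H. Qed.
Lemma N_nonneg p N (HN : is_norm p N) v : 0 <= N v.
Proof. destruct HN as [_ [H _]]. apply H. Qed.
Lemma N_def p N (HN : is_norm p N) v : N v = 0 -> forall k, (k < p)%nat -> v k = 0.
Proof. destruct HN as [_ [_ [H _]]]. apply H. Qed.
Lemma N_hom p N (HN : is_norm p N) c v : N (fun k => c * v k) = Rabs c * N v.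
Proof. destruct HN as [_ [_ [_ [H _]]]]. apply H. Qed.
Lemma N_tri p N (HN : is_norm p N) v w : N (fun k => v k + w k) <= N v + N w.
Proof. destruct HN as [_ [_ [_ [_ H]]]]. apply H. Qed.

Lemma N_zero p N (HN : is_norm p N) : N (fun _ => 0) = 0.
Proof. rewrite (N_ext p N HN _ (fun k => 0 * (fun _ => 0) k)) by (intros; lra).
  rewrite (N_hom p N HN). rewrite Rabs_R0. lra. Qed.
Lemma N_opp p N (HN : is_norm p N) v : N (fun k => - v k) = N v.
Proof. rewrite (N_ext p N HN _ (fun k => -1 * v k)) by (intros; lra).
  rewrite (N_hom p N HN). replace (Rabs (-1)) with 1. lra. rewrite Rabs_left; lra. Qed.
Lemma N_scal_pos p N (HN : is_norm p N) c v : 0 <= c -> N (fun k => c * v k) = c * N v.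
Proof. intros. rewrite (N_hom p N HN). rewrite Rabs_pos_eq; auto. Qed.

Definition evec (k : nat) : nat -> R := fun j => kdelta j k.
Definition Mn p N : R := fsum p (fun k => N (evec k)).

Lemma N_sum_bound p N (HN : is_norm p N) d (v : nat -> R) :
  N (fun j => fsum d (fun k => v k * evec k j)) <= fsum d (fun k => Rabs (v k) * N (evec k)).
Proof. induction d; simpl.
  - rewrite (N_zero p N HN). lra.
  - eapply Rle_trans. apply (N_tri p N HN (fun j => fsum d (fun k => v k * evec k j)) (fun j => v d * evec d j)).
    rewrite (N_hom p N HN). lra. Qed.

Lemma N_upper_abs p N (HN : is_norm p N) v : N v <= fsum p (fun k => Rabs (v k) * N (evec k)).
Proof. rewrite (N_ext p N HN v (fun j => fsum p (fun k => v k * evec k j))). apply (N_sum_bound p N HN).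
  intros j Hj. unfold evec. rewrite (fsum_ext _ _ (fun k => kdelta k j * v k)).
  rewrite fsum_delta; auto. intros; rewrite kdelta_sym; lra. Qed.

Lemma Mn_nonneg p N (HN : is_norm p N) : 0 <= Mn p N.
Proof. apply fsum_nonneg. intros; apply (N_nonneg p N HN). Qed.

Lemma N_upper p N (HN : is_norm p N) v : N v <= Mn p N * sqrt (sq p v).
Proof. eapply Rle_trans. apply (N_upper_abs p N HN). unfold Mn. rewrite Rmult_comm, <- fsum_scal.
  apply fsum_le. intros. apply Rmult_le_compat_r. apply (N_nonneg p N HN). apply coord_le_sqrt; auto. Qed.

Lemma N_lip p N (HN : is_norm p N) v w : N v <= N w + fsum p (fun k => Rabs (v k - w k) * N (evec k)).
Proof. rewrite (N_ext p N HN v (fun k => (v k - w k) + w k)) by (intros; lra).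
  eapply Rle_trans. apply (N_tri p N HN). pose proof (N_upper_abs p N HN (fun k => v k - w k)). simpl in H. lra. Qed.

Lemma CV_N p N (HN : is_norm p N) (vs : nat -> nat -> R) v :
  (forall k, (k < p)%nat -> Un_cv (fun m => vs m k) (v k)) -> Un_cv (fun m => N (vs m)) (N v).
Proof. intros H.
  apply (Rabs_squeeze _ (fun m => fsum p (fun k => Rabs (vs m k - v k) * N (evec k)))).
  - intros m. pose proof (N_lip p N HN (vs m) v). pose proof (N_lip p N HN v (vs m)).
    assert (fsum p (fun k => Rabs (v k - vs m k) * N (evec k)) = fsum p (fun k => Rabs (vs m k - v k) * N (evec k))).
    { apply fsum_ext; intros. rewrite Rabs_minus_sym; auto. }
    unfold Rabs at 1. destruct (Rcase_abs _); lra.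
  - replace 0 with (fsum p (fun k => 0 * N (evec k))). apply (CV_fsum p (fun m k => Rabs (vs m k - v k) * N (evec k))).
    intros. apply CV_mult. apply CV_abs0; auto. apply CV_const.
    rewrite (fsum_ext _ _ (fun _ => 0)). apply fsum_zero. intros; lra.
Qed.

Lemma N_lower p N (HN : is_norm p N) : (0 < p)%nat ->
  exists c, 0 < c /\ forall v, c * sqrt (sq p v) <= N v.
Proof.
  intros Hp.
  destruct (argmax p (fun v => sq p v = 1) (fun v => - N v) (fun _ => 1) 0) as [z [Hz Hmin]].
  - exists (evec 0). unfold sq, evec. rewrite (fsum_ext _ _ (fun k => kdelta k 0 * 1)). apply fsum_delta; auto.
    intros. unfold kdelta. destruct (Nat.eqb k 0); lra.
  - intros v Hv k Hk. pose proof (coord_le_sqrt p v k Hk). rewrite Hv, sqrt_1 in H. auto.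
  - intros vs v Hvs Hc. split.
    + pose proof (CV_sq p vs v Hc). apply (CV_unique (fun m => sq p (vs m))); auto.
      apply (CV_ext (fun _ => 1)). intros; rewrite Hvs; auto. apply CV_const.
    + apply CV_opp. apply (CV_N p N HN); auto.
  - intros. pose proof (N_nonneg p N HN v). lra.
  - exists (N z). assert (Hpos : 0 < N z).
    { destruct (N_nonneg p N HN z); auto. exfalso. pose proof (N_def p N HN z (eq_sym H)).
      assert (sq p z = 0). { unfold sq. rewrite (fsum_ext _ _ (fun _ => 0)). apply fsum_zero.
        intros. rewrite H0; auto. ring. } lra. }
    split; auto. intros v.
    destruct (Req_dec (sq p v) 0) as [H0|H0].
    + rewrite H0, sqrt_0. pose proof (N_nonneg p N HN v). lra.
    + pose proof (sq_nonneg p v). set (s := sqrt (sq p v)).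
      assert (Hs : 0 < s) by (apply sqrt_lt_R0; lra).
      assert (Hss : s * s = sq p v) by (apply sqrt_sqrt; lra).
      assert (sq p (fun k => / s * v k) = 1).
      { unfold sq. rewrite (fsum_ext _ _ (fun k => (/ s) ^ 2 * v k ^ 2)) by (intros; ring).
        rewrite fsum_scal. fold (sq p v). rewrite <- Hss. field. lra. }
      specialize (Hmin _ H1). simpl in Hmin. rewrite (N_scal_pos p N HN) in Hmin by (left; apply Rinv_0_lt_compat; auto).
      assert (N z <= / s * N v) by lra.
      apply Rmult_le_compat_l with (r := s) in H2; [|lra].
      rewrite <- Rmult_assoc, Rinv_r in H2 by lra. lra.
Qed.

Definition Dset p (N : (nat -> R) -> R) lam : R -> Prop := fun t => exists v, N v <= 1 /\ t = dot p lam v.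

Lemma dn_lub p N (HN : is_norm p N) (Hp : (0 < p)%nat) lam : is_lub (Dset p N lam) (dual_norm p N lam).
Proof.
  unfold dual_norm. apply epsilon_spec.
  destruct (N_lower p N HN Hp) as [c [Hc Hlow]].
  destruct (completeness (Dset p N lam)) as [m Hm].
  - exists (fsum p (fun k => Rabs (lam k) * / c)). intros t [v [Hv ->]]. unfold dot.
    apply fsum_le. intros k Hk.
    assert (Rabs (v k) <= / c).
    { pose proof (coord_le_sqrt p v k Hk). specialize (Hlow v).
      apply Rmult_le_reg_l with c; auto. rewrite Rinv_r by lra. nra. }
    eapply Rle_trans. apply Rle_abs. rewrite Rabs_mult. apply Rmult_le_compat_l. apply Rabs_pos. auto.
  - exists 0. exists (fun _ => 0). split. rewrite (N_zero p N HN). lra. rewrite dot_sym, dot_zero_l. auto.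
  - exists m; auto.
Qed.

Lemma dn_nonneg p N (HN : is_norm p N) (Hp : (0 < p)%nat) lam : 0 <= dual_norm p N lam.
Proof. destruct (dn_lub p N HN Hp lam) as [H _]. apply H. exists (fun _ => 0). split.
  rewrite (N_zero p N HN). lra. rewrite dot_sym, dot_zero_l. auto. Qed.

Lemma dn_le p N (HN : is_norm p N) (Hp : (0 < p)%nat) lam r :
  (forall v, N v <= 1 -> dot p lam v <= r) -> dual_norm p N lam <= r.
Proof. intros H. destruct (dn_lub p N HN Hp lam) as [_ H2]. apply H2. intros t [v [Hv ->]]. auto. Qed.

Lemma dot_le_dn p N (HN : is_norm p N) (Hp : (0 < p)%nat) lam v : dot p lam v <= dual_norm p N lam * N v.
Proof.
  pose proof (dn_nonneg p N HN Hp lam). destruct (N_nonneg p N HN v) as [Hv|Hv].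
  - destruct (dn_lub p N HN Hp lam) as [H1 _].
    assert (dot p lam (fun k => / N v * v k) <= dual_norm p N lam).
    { apply H1. eexists; split; [|reflexivity]. rewrite (N_scal_pos p N HN) by (left; apply Rinv_0_lt_compat; auto).
      rewrite Rinv_l by lra. lra. }
    rewrite dot_scal_r in H0. apply Rmult_le_compat_r with (r := N v) in H0; [|lra].
    rewrite Rmult_comm, <- Rmult_assoc, Rinv_r in H0 by lra. lra.
  - rewrite (dot_ext p lam v lam (fun _ => 0)) by (auto; intros; apply (N_def p N HN); auto).
    rewrite dot_sym, dot_zero_l. rewrite <- Hv. lra.
Qed.

Lemma dn_ext p N (HN : is_norm p N) (Hp : (0 < p)%nat) a b : (forall k, (k < p)%nat -> a k = b k) ->
  dual_norm p N a = dual_norm p N b.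
Proof. intros H. apply Rle_antisym; apply dn_le; auto; intros v Hv.
  - rewrite (dot_ext p a v b v) by auto. eapply Rle_trans. apply (dot_le_dn p N HN Hp). pose proof (dn_nonneg p N HN Hp b). nra.
  - rewrite (dot_ext p b v a v) by (intros; symmetry; auto). eapply Rle_trans. apply (dot_le_dn p N HN Hp). pose proof (dn_nonneg p N HN Hp a). nra.
Qed.

Lemma dn_conv p N (HN : is_norm p N) (Hp : (0 < p)%nat) a b s : 0 <= s <= 1 ->
  dual_norm p N (fun k => s * a k + (1 - s) * b k) <= s * dual_norm p N a + (1 - s) * dual_norm p N b.
Proof. intros Hs. apply dn_le; auto. intros v Hv.
  replace (dot p (fun k => s * a k + (1 - s) * b k) v) with (s * dot p a v + (1 - s) * dot p b v).
  pose proof (dot_le_dn p N HN Hp a v). pose proof (dot_le_dn p N HN Hp b v).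
  pose proof (dn_nonneg p N HN Hp a). pose proof (dn_nonneg p N HN Hp b). pose proof (N_nonneg p N HN v).
  assert (dot p a v <= dual_norm p N a) by nra. assert (dot p b v <= dual_norm p N b) by nra.
  apply Rplus_le_compat; apply Rmult_le_compat_l; lra.
  unfold dot. rewrite <- !fsum_scal, <- fsum_plus. apply fsum_ext; intros; ring. Qed.

Lemma dn_scal p N (HN : is_norm p N) (Hp : (0 < p)%nat) a c : 0 <= c ->
  dual_norm p N (fun k => c * a k) <= c * dual_norm p N a.
Proof. intros Hc. apply dn_le; auto. intros v Hv. rewrite dot_scal_l.
  pose proof (dot_le_dn p N HN Hp a v). pose proof (dn_nonneg p N HN Hp a). pose proof (N_nonneg p N HN v).
  apply Rmult_le_compat_l; auto. nra. Qed.

Lemma dn_closed p N (HN : is_norm p N) (Hp : (0 < p)%nat) (vs : nat -> nat -> R) v r :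
  (forall m, dual_norm p N (vs m) <= r) -> (forall k, (k < p)%nat -> Un_cv (fun m => vs m k) (v k)) ->
  dual_norm p N v <= r.
Proof. intros H Hc. apply dn_le; auto. intros w Hw.
  apply (CV_le_const (fun m => dot p (vs m) w)). apply CV_dot; auto. intros; apply CV_const.
  intros m. eapply Rle_trans. apply (dot_le_dn p N HN Hp). pose proof (dn_nonneg p N HN Hp (vs m)).
  pose proof (N_nonneg p N HN w). specialize (H m). nra. Qed.

Lemma dn_coord p N (HN : is_norm p N) (Hp : (0 < p)%nat) lam r : dual_norm p N lam <= r ->
  forall k, (k < p)%nat -> Rabs (lam k) <= r * Mn p N.
Proof. intros H k Hk. pose proof (coord_le_sqrt p lam k Hk). eapply Rle_trans; [apply H0|].
  pose proof (dot_le_dn p N HN Hp lam lam). rewrite dot_self in H1.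
  pose proof (N_upper p N HN lam). pose proof (dn_nonneg p N HN Hp lam). pose proof (N_nonneg p N HN lam).
  pose proof (sq_nonneg p lam). pose proof (Mn_nonneg p N HN).
  set (s := sqrt (sq p lam)) in *. assert (Hss : s * s = sq p lam) by (apply sqrt_sqrt; auto).
  assert (0 <= s) by apply sqrt_pos.
  assert (0 <= r) by lra.
  destruct H7 as [H7|H7]. 2:{ rewrite <- H7. nra. }
  assert (s * s <= r * Mn p N * s).
  { rewrite Hss. eapply Rle_trans. apply H1. assert (dual_norm p N lam * N lam <= dual_norm p N lam * (Mn p N * s)) by (apply Rmult_le_compat_l; auto).
    assert (dual_norm p N lam * (Mn p N * s) <= r * (Mn p N * s)) by (apply Rmult_le_compat_r; nra). nra. }
  nra.
Qed.

Definition is_proj p (S : (nat -> R) -> Prop) y z := S z /\ forall w, S w -> sqdist p y z <= sqdist p y w.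

Lemma proj_exists p (S : (nat -> R) -> Prop) (Rb : nat -> R) y :
  (exists v, S v) ->
  (forall v, S v -> forall k, (k < p)%nat -> Rabs (v k) <= Rb k) ->
  (forall (vs : nat -> nat -> R) v, (forall m, S (vs m)) ->
     (forall k, (k < p)%nat -> Un_cv (fun m => vs m k) (v k)) -> S v) ->
  exists z, is_proj p S y z.
Proof. intros Hne Hb Hcl.
  destruct (argmax p S (fun w => - sqdist p y w) Rb 0) as [z [Hz Hmin]]; auto.
  - intros vs v Hvs Hc. split. eapply Hcl; eauto. apply CV_opp. rewrite sqdist_sq.
    apply (CV_ext (fun m => sq p (fun k => y k - vs m k))). intros; auto.
    apply (CV_sq p (fun m k => y k - vs m k)). intros. apply CV_minus; auto. apply CV_const.
  - intros. pose proof (sq_nonneg p (fun k => y k - v k)). rewrite sqdist_sq. lra.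
  - exists z. split; auto. intros w Hw. specialize (Hmin w Hw). lra.
Qed.

Lemma proj_spec p S y : (exists z, is_proj p S y z) -> is_proj p S y (proj p S y).
Proof. intros H. unfold proj. apply epsilon_spec. auto. Qed.

Lemma proj_VI p (S : (nat -> R) -> Prop) y z :
  (forall a b s, S a -> S b -> 0 <= s <= 1 -> S (fun k => s * a k + (1 - s) * b k)) ->
  is_proj p S y z -> forall b, S b -> dot p (fun k => y k - z k) (fun k => b k - z k) <= 0.
Proof.
  intros Hconv [Hz Hmin] b Hb.
  assert (Hs : forall s, 0 < s <= 1 -> 2 * dot p (fun k => y k - z k) (fun k => b k - z k) <= s * sq p (fun k => b k - z k)).
  { intros s Hs. specialize (Hmin _ (Hconv b z s Hb Hz ltac:(lra))). assert (E1 : sqdist p y (fun k => s * b k + (1 - s) * z k) = sq p (fun k => (y k - z k) - s * (b k - z k)))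
      by (unfold sqdist, sq; apply fsum_ext; intros; ring).
    rewrite E1 in Hmin. rewrite sqdist_sq in Hmin.
    rewrite (sq_comb p (fun k => y k - z k) (fun k => b k - z k) s) in Hmin. nra. }
  set (D := dot p _ _) in *. set (Q := sq p _) in *. assert (0 <= Q) by apply sq_nonneg.
  destruct (Rle_dec D 0); auto. exfalso.
  destruct (Req_dec Q 0). specialize (Hs 1 ltac:(lra)). lra.
  destruct (Rle_dec (D / Q) 1) as [HDQ|HDQ].
  - specialize (Hs (D / Q)). assert (0 < D / Q) by (apply Rdiv_lt_0_compat; lra).
    specialize (Hs ltac:(lra)). replace (D / Q * Q) with D in Hs by (field; auto). lra.
  - specialize (Hs 1 ltac:(lra)). assert (Q < D). { apply Rnot_le_lt in HDQ. apply Rmult_lt_compat_r with (r := Q) in HDQ; [|lra].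
      replace (D / Q * Q) with D in HDQ by (field; auto). lra. } lra.
Qed.

Lemma proj_nonexp p (S : (nat -> R) -> Prop) y1 y2 z1 z2 :
  (forall a b s, S a -> S b -> 0 <= s <= 1 -> S (fun k => s * a k + (1 - s) * b k)) ->
  is_proj p S y1 z1 -> is_proj p S y2 z2 ->
  sq p (fun k => z1 k - z2 k) <= sq p (fun k => y1 k - y2 k).
Proof.
  intros Hc H1 H2. pose proof (proj_VI p S y1 z1 Hc H1 z2 (proj1 H2)).
  pose proof (proj_VI p S y2 z2 Hc H2 z1 (proj1 H1)). unfold dot in *.
  assert (fsum p (fun k => (z1 k - z2 k) ^ 2 - (y1 k - y2 k) ^ 2) <=
          fsum p (fun k => 2 * ((y1 k - z1 k) * (z2 k - z1 k) + (y2 k - z2 k) * (z1 k - z2 k)))).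
  { apply fsum_le. intros. pose proof (pow2_ge_0 ((y1 k - y2 k) - (z1 k - z2 k))). nra. }
  rewrite fsum_minus, fsum_scal, fsum_plus in H3. unfold sq. lra.
Qed.

Lemma N_ball_proj p N (HN : is_norm p N) (Hp : (0 < p)%nat) y : exists z, is_proj p (fun v => N v <= 1) y z.
Proof.
  destruct (N_lower p N HN Hp) as [c [Hc Hlow]].
  apply (proj_exists p _ (fun _ => / c)).
  - exists (fun _ => 0). rewrite (N_zero p N HN). lra.
  - intros v Hv k Hk. pose proof (coord_le_sqrt p v k Hk). specialize (Hlow v).
    apply Rmult_le_reg_l with c; auto. rewrite Rinv_r by lra. nra.
  - intros vs v Hvs Hcv. apply (CV_le_const (fun m => N (vs m))). apply (CV_N p N HN); auto. auto.
Qed.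

Lemma N_ball_conv p N (HN : is_norm p N) : forall a b s, N a <= 1 -> N b <= 1 -> 0 <= s <= 1 ->
  N (fun k => s * a k + (1 - s) * b k) <= 1.
Proof. intros a b s Ha Hb Hs. eapply Rle_trans. apply (N_tri p N HN (fun k => s * a k) (fun k => (1 - s) * b k)).
  rewrite !(N_scal_pos p N HN) by lra. nra. Qed.

Lemma bidual p N (HN : is_norm p N) (Hp : (0 < p)%nat) h t : 0 < N h -> 1 < t ->
  exists mu, dual_norm p N mu <= 1 /\ N h / t < dot p mu h.
Proof.
  intros Hh Ht.
  set (y := fun k => (t / N h) * h k).
  assert (HNy : N y = t). { unfold y. rewrite (N_scal_pos p N HN) by (apply Rlt_le, Rdiv_lt_0_compat; lra). field. lra. }
  destruct (N_ball_proj p N HN Hp y) as [z Hz].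
  pose proof (proj_VI p _ y z (N_ball_conv p N HN) Hz) as VI.
  set (d := fun k => y k - z k) in *.
  set (sig := dot p d z).
  assert (Hdb : forall b, N b <= 1 -> dot p d b <= sig).
  { intros b Hb. specialize (VI b Hb). rewrite dot_minus_r in VI. unfold sig. lra. }
  assert (HNd : 0 < N d).
  { destruct (N_nonneg p N HN d); auto. exfalso. pose proof (N_def p N HN d (eq_sym H)).
    assert (N y = N z). { apply (N_ext p N HN). intros. specialize (H0 k H1). unfold d in H0. lra. }
    destruct Hz as [Hz _]. lra. }
  assert (Hsqd : 0 < sq p d).
  { destruct (sq_nonneg p d); auto. exfalso. pose proof (sq_zero p d ltac:(lra)).
    rewrite (N_ext p N HN d (fun _ => 0)) in HNd by auto. rewrite (N_zero p N HN) in HNd. lra. }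
  assert (Hsig : 0 < sig).
  { specialize (Hdb (fun k => / N d * d k)). rewrite dot_scal_r, dot_self in Hdb.
    rewrite (N_scal_pos p N HN) in Hdb by (left; apply Rinv_0_lt_compat; auto). rewrite Rinv_l in Hdb by lra.
    specialize (Hdb ltac:(lra)). pose proof (Rinv_0_lt_compat _ HNd). nra. }
  exists (fun k => / sig * d k). split.
  - apply dn_le; auto. intros v Hv. rewrite dot_scal_l. specialize (Hdb v Hv).
    apply Rmult_le_reg_l with sig; auto. rewrite <- Rmult_assoc, Rinv_r by lra. lra.
  - rewrite dot_scal_l.
    assert (Hy : dot p d y = sig + sq p d).
    { rewrite <- dot_self. unfold sig. rewrite <- dot_plus_r. apply dot_ext; auto. intros; unfold d; ring. }
    assert (Hyh : dot p d y = t / N h * dot p d h). { unfold y. rewrite dot_scal_r. auto. }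
    assert (dot p d h = N h / t * (sig + sq p d)). { rewrite <- Hy, Hyh. field. lra. }
    rewrite H. assert (0 < N h / t) by (apply Rdiv_lt_0_compat; lra).
    apply Rmult_lt_reg_l with sig; auto.
    replace (sig * (/ sig * (N h / t * (sig + sq p d)))) with (N h / t * (sig + sq p d)) by (field; lra). nra.
Qed.

Lemma dual_sup p N (HN : is_norm p N) (Hp : (0 < p)%nat) h r D : 0 <= r ->
  (forall mu, dual_norm p N mu <= r -> dot p mu h <= D) -> r * N h <= D.
Proof.
  intros Hr H.
  assert (HD : 0 <= D). { specialize (H (fun _ => 0)). rewrite dot_zero_l in H. apply H.
    apply dn_le; auto. intros. rewrite dot_zero_l. lra. }
  pose proof (N_nonneg p N HN h).
  destruct (Rle_dec (r * N h) D); auto. exfalso.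
  assert (0 < r) by (destruct Hr; auto; subst; lra).
  assert (0 < N h) by (destruct H0; auto; rewrite <- H0 in n; lra).
  set (a := r * N h) in *.
  destruct (bidual p N HN Hp h (2 * a / (a + D))) as [mu [Hmu Hd]]; auto.
  { apply Rmult_lt_reg_r with (a + D). lra. unfold Rdiv. rewrite Rmult_assoc, Rinv_l by lra. lra. }
  specialize (H (fun k => r * mu k)). rewrite dot_scal_l in H.
  assert (dual_norm p N (fun k => r * mu k) <= r). { eapply Rle_trans. apply dn_scal; auto. nra. }
  specialize (H H3).
  assert (N h / (2 * a / (a + D)) = (a + D) / (2 * r)). { assert (Ha : 0 < a) by (unfold a; nra). replace (N h) with (a / r) by (unfold a; field; lra). field. repeat split; lra. }
  rewrite H4 in Hd. apply Rmult_lt_compat_l with (r := r) in Hd; auto.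
  replace (r * ((a + D) / (2 * r))) with ((a + D)/2) in Hd by (field; lra). lra.
Qed.

Definition edges_ok (n : nat) (E : list (nat * nat)) : Prop :=
  forall l, (l < length E)%nat -> (fst (edge E l) < snd (edge E l))%nat /\ (snd (edge E l) < n)%nat.

Lemma edges_ok_of n E : (forall e, In e E -> (fst e < snd e)%nat /\ (snd e < n)%nat) -> edges_ok n E.
Proof. intros H l Hl. apply H. unfold edge. apply nth_In. auto. Qed.

Lemma if_kdelta (a i : nat) (x : R) : (if Nat.eqb a i then x else 0) = kdelta i a * x.
Proof. unfold kdelta. rewrite Nat.eqb_sym. destruct (Nat.eqb i a); ring. Qed.

Definition Aop (E : list (nat * nat)) (U : nat -> nat -> R) (l k : nat) : R :=
  U (fst (edge E l)) k - U (snd (edge E l)) k.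

Lemma Delta_eq E lam i k : ama_Delta E lam i k =
  fsum (length E) (fun l => (kdelta i (fst (edge E l)) - kdelta i (snd (edge E l))) * lam l k).
Proof. unfold ama_Delta. rewrite <- fsum_minus. apply fsum_ext. intros. rewrite !if_kdelta. ring. Qed.

Lemma adjoint n p E (HE : edges_ok n E) lam U :
  fsum n (fun i => fsum p (fun k => ama_Delta E lam i k * U i k)) =
  fsum (length E) (fun l => fsum p (fun k => lam l k * Aop E U l k)).
Proof.
  set (e := length E).
  transitivity (fsum n (fun i => fsum p (fun k => fsum e (fun l =>
      (kdelta i (fst (edge E l)) - kdelta i (snd (edge E l))) * (lam l k * U i k))))).
  { apply fsum_ext; intros i _. apply fsum_ext; intros k _. rewrite Delta_eq.
    rewrite Rmult_comm, <- fsum_scal. apply fsum_ext; intros; ring. }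
  transitivity (fsum n (fun i => fsum e (fun l => fsum p (fun k =>
      (kdelta i (fst (edge E l)) - kdelta i (snd (edge E l))) * (lam l k * U i k))))).
  { apply fsum_ext; intros i _. apply fsum_swap. }
  rewrite fsum_swap. apply fsum_ext; intros l Hl. rewrite fsum_swap. apply fsum_ext; intros k _.
  destruct (HE l Hl) as [H1 H2].
  rewrite (fsum_ext _ _ (fun i => kdelta i (fst (edge E l)) * (lam l k * U i k) - kdelta i (snd (edge E l)) * (lam l k * U i k)))
    by (intros; ring).
  rewrite fsum_minus, !fsum_delta by lia. unfold Aop. ring.
Qed.

Lemma Phi_eq E l j : (fst (edge E l) < snd (edge E l))%nat ->
  Phi E l j = kdelta j (fst (edge E l)) - kdelta j (snd (edge E l)).
Proof. intros H. unfold Phi, kdelta.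
  destruct (Nat.eqb_spec j (fst (edge E l))); destruct (Nat.eqb_spec j (snd (edge E l))); try lia; ring. Qed.

Lemma Phi_apply n E (HE : edges_ok n E) l y : (l < length E)%nat ->
  fsum n (fun j => Phi E l j * y j) = y (fst (edge E l)) - y (snd (edge E l)).
Proof. intros Hl. destruct (HE l Hl).
  rewrite (fsum_ext _ _ (fun j => kdelta j (fst (edge E l)) * y j - kdelta j (snd (edge E l)) * y j)).
  rewrite fsum_minus, !fsum_delta by lia. auto.
  intros. rewrite Phi_eq by auto. ring. Qed.

Lemma Lap_apply n E (HE : edges_ok n E) y i :
  fsum n (fun j => Lap E i j * y j) = fsum (length E) (fun l => Phi E l i * (y (fst (edge E l)) - y (snd (edge E l)))).
Proof. unfold Lap.
  rewrite (fsum_ext n _ (fun j => fsum (length E) (fun l => Phi E l i * (Phi E l j * y j)))).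
  rewrite fsum_swap. apply fsum_ext. intros l Hl. rewrite fsum_scal. rewrite (Phi_apply n E HE) by auto. auto.
  intros. rewrite Rmult_comm, <- fsum_scal. apply fsum_ext; intros; ring. Qed.

Definition Bq (E : list (nat * nat)) (y z : nat -> R) : R :=
  fsum (length E) (fun l => (y (fst (edge E l)) - y (snd (edge E l))) * (z (fst (edge E l)) - z (snd (edge E l)))).

Lemma Lap_form n E (HE : edges_ok n E) y z :
  fsum n (fun i => z i * fsum n (fun j => Lap E i j * y j)) = Bq E y z.
Proof.
  rewrite (fsum_ext n _ (fun i => fsum (length E) (fun l => (Phi E l i * z i) * (y (fst (edge E l)) - y (snd (edge E l)))))).
  rewrite fsum_swap. unfold Bq. apply fsum_ext. intros l Hl.
  rewrite (fsum_ext n _ (fun i => (y (fst (edge E l)) - y (snd (edge E l))) * (Phi E l i * z i))) by (intros; ring).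
  rewrite fsum_scal. rewrite (Phi_apply n E HE) by auto. auto.
  intros. rewrite Lap_apply by auto. rewrite <- fsum_scal. apply fsum_ext; intros; ring. Qed.

Lemma Bq_expand E y z t : Bq E (fun i => y i + t * z i) (fun i => y i + t * z i) =
  Bq E y y + 2 * t * Bq E y z + t ^ 2 * Bq E z z.
Proof. unfold Bq. rewrite <- !fsum_scal, <- !fsum_plus. apply fsum_ext; intros; ring. Qed.

Lemma Bq_scal E y c : Bq E (fun i => c * y i) (fun i => c * y i) = c ^ 2 * Bq E y y.
Proof. unfold Bq. rewrite <- fsum_scal. apply fsum_ext; intros; ring. Qed.

Lemma Bq_ext n E (HE : edges_ok n E) y y' z z' : (forall i, (i < n)%nat -> y i = y' i) -> (forall i, (i < n)%nat -> z i = z' i) ->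
  Bq E y z = Bq E y' z'.
Proof. intros. unfold Bq. apply fsum_ext. intros l Hl. destruct (HE l Hl). rewrite !H, !H0 by lia. auto. Qed.

Lemma Bq_nonneg E y : 0 <= Bq E y y.
Proof. apply fsum_nonneg. intros. cbv beta. apply Rle_0_sqr. Qed.

Lemma quad_zero a b : (forall t, a * t + b * t ^ 2 <= 0) -> a = 0.
Proof. intros H. set (s := / (Rabs b + 1)).
  assert (Hs : 0 < s) by (apply Rinv_0_lt_compat; pose proof (Rabs_pos b); lra).
  assert (Hbs : 0 < 1 + b * s).
  { unfold s. pose proof (Rabs_pos b). pose proof (Rle_abs (-b)). rewrite Rabs_Ropp in H1.
    apply Rmult_lt_reg_l with (Rabs b + 1). lra. rewrite Rmult_plus_distr_l.
    replace ((Rabs b + 1) * (b * / (Rabs b + 1))) with b by (field; lra). lra. }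
  specialize (H (s * a)). assert (a ^ 2 * (s * (1 + b * s)) <= 0) by (replace (a ^ 2 * (s * (1 + b * s))) with (a * (s * a) + b * (s * a) ^ 2) by ring; auto).
  assert (0 < s * (1 + b * s)) by (apply Rmult_lt_0_compat; auto).
  assert (0 <= a ^ 2) by apply pow2_ge_0. assert (a ^ 2 <= 0). { apply Rmult_le_reg_r with (s * (1 + b * s)); auto. lra. }
  assert (a ^ 2 = 0) by lra. nra. Qed.

Lemma rho_nonneg n E (HE : edges_ok n E) rho : is_eigenvalue n (Lap E) rho -> 0 <= rho.
Proof. intros [v [[k [Hk Hv]] Hev]].
  pose proof (Lap_form n E HE v v).
  rewrite (fsum_ext n _ (fun i => rho * v i ^ 2)) in H.
  rewrite fsum_scal in H. fold (sq n v) in H. pose proof (Bq_nonneg E v).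
  assert (0 < sq n v). { apply Rlt_le_trans with (v k ^ 2). { assert (v k * v k > 0) by (apply Rsqr_pos_lt; auto). simpl; lra. }
    apply (fsum_term_le n (fun k => v k ^ 2)); auto. intros; apply pow2_ge_0. }
  nra.
  intros. rewrite Hev by auto. ring.
Qed.

Lemma sq_normalize d w : 0 < sq d w -> sq d (fun k => / sqrt (sq d w) * w k) = 1.
Proof. intros H. set (s := sqrt (sq d w)). assert (Hs : 0 < s) by (apply sqrt_lt_R0; lra).
  assert (Hss : s * s = sq d w) by (apply sqrt_sqrt; lra).
  unfold sq. rewrite (fsum_ext _ _ (fun k => (/ s) ^ 2 * w k ^ 2)) by (intros; ring).
  rewrite fsum_scal. fold (sq d w). rewrite <- Hss. field. lra. Qed.

Lemma evec_dot d y i : (i < d)%nat -> dot d y (evec i) = y i.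
Proof. intros. unfold dot, evec. rewrite (fsum_ext _ _ (fun k => kdelta k i * y k)). apply fsum_delta; auto.
  intros; ring. Qed.

Lemma rayleigh n E (HE : edges_ok n E) rho : is_largest_eigenvalue n (Lap E) rho ->
  forall y, Bq E y y <= rho * sq n y.
Proof.
  intros [Hev Hmax].
  assert (Hn : (0 < n)%nat). { destruct Hev as [v [[k [Hk _]] _]]. lia. }
  destruct (argmax n (fun y => sq n y = 1) (fun y => Bq E y y) (fun _ => 1) (fsum (length E) (fun _ => 4)))
    as [ys [Hys Hymax]].
  - exists (evec 0). unfold sq, evec. rewrite (fsum_ext _ _ (fun k => kdelta k 0 * 1)). apply fsum_delta; auto.
    intros. unfold kdelta. destruct (Nat.eqb k 0); lra.
  - intros v Hv k Hk. pose proof (coord_le_sqrt n v k Hk). rewrite Hv, sqrt_1 in H. auto.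
  - intros vs v Hvs Hc. split.
    + pose proof (CV_sq n vs v Hc). apply (CV_unique (fun m => sq n (vs m))); auto.
      apply (CV_ext (fun _ => 1)). intros; rewrite Hvs; auto. apply CV_const.
    + unfold Bq. apply (CV_fsum _ (fun m l => (vs m (fst (edge E l)) - vs m (snd (edge E l))) *
                                           (vs m (fst (edge E l)) - vs m (snd (edge E l))))).
      intros l Hl. destruct (HE l Hl). apply CV_mult; apply CV_minus; apply Hc; lia.
  - intros v Hv. unfold Bq. apply fsum_le. intros l Hl. destruct (HE l Hl).
    pose proof (fsum_term_le n (fun k => v k ^ 2) (fst (edge E l)) (fun k _ => pow2_ge_0 (v k)) ltac:(lia)).
    pose proof (fsum_term_le n (fun k => v k ^ 2) (snd (edge E l)) (fun k _ => pow2_ge_0 (v k)) ltac:(lia)).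
    fold (sq n v) in H1, H2. rewrite Hv in H1, H2. simpl in H1, H2. nra.
  - set (mu := Bq E ys ys).
    assert (Hall : forall w, Bq E w w <= mu * sq n w).
    { intros w. pose proof (sq_nonneg n w). destruct H as [H|H].
      - specialize (Hymax _ (sq_normalize n w H)). rewrite Bq_scal in Hymax.
        set (s := sqrt (sq n w)) in *. assert (Hs : 0 < s) by (apply sqrt_lt_R0; lra).
        assert (Hss : s * s = sq n w) by (apply sqrt_sqrt; lra).
        rewrite <- Hss. apply Rmult_le_reg_l with ((/ s) ^ 2). apply pow_lt. apply Rinv_0_lt_compat; auto.
        fold mu in Hymax. replace ((/ s) ^ 2 * (mu * (s * s))) with mu by (field; lra). auto.
      - rewrite (Bq_ext n E HE w (fun _ => 0) w (fun _ => 0)). unfold Bq. rewrite (fsum_ext _ _ (fun _ => 0)).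
        rewrite fsum_zero, <- H. lra. intros; ring.
        apply sq_zero; lra. apply sq_zero; lra. }
    assert (Heig : is_eigenvalue n (Lap E) mu).
    { exists ys. split.
      - apply NNPP. intros Hc. assert (sq n ys <= 0). { unfold sq. rewrite (fsum_ext _ _ (fun _ => 0)).
          rewrite fsum_zero. lra. intros k Hk. destruct (Req_dec (ys k) 0). rewrite H. ring. exfalso; apply Hc; eauto. }
        lra.
      - intros i Hi.
        assert (HB : Bq E ys (evec i) = mu * dot n ys (evec i)).
        { assert (Hq : forall t, 2 * (Bq E ys (evec i) - mu * dot n ys (evec i)) * t +
                                  (Bq E (evec i) (evec i) - mu * sq n (evec i)) * t ^ 2 <= 0).
          { intros t. specialize (Hall (fun k => ys k + t * evec i k)). rewrite Bq_expand in Hall.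
            assert (Esq : sq n (fun k => ys k + t * evec i k) = sq n (fun k => ys k - (- t) * evec i k)) by (unfold sq; apply fsum_ext; intros; ring).
            rewrite Esq, sq_comb in Hall.
            fold mu in Hall. rewrite Hys in Hall. nra. }
          apply quad_zero in Hq. lra. }
        rewrite evec_dot in HB by auto. rewrite <- HB.
        rewrite <- (Lap_form n E HE ys (evec i)).
        transitivity (fsum n (fun k => kdelta k i * fsum n (fun j => Lap E k j * ys j))).
        symmetry. apply fsum_delta; auto. apply fsum_ext; intros; unfold evec; ring. }
    specialize (Hmax _ Heig). intros y. eapply Rle_trans. apply Hall. apply Rmult_le_compat_r. apply sq_nonneg. auto.
Qed.

Lemma divmod_lk p l k : (k < p)%nat -> ((l * p + k) / p = l)%nat /\ ((l * p + k) mod p = k)%nat.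
Proof. intros. split.
  - rewrite Nat.div_add_l by lia. rewrite Nat.div_small by lia. lia.
  - rewrite Nat.add_comm. rewrite Nat.Div0.mod_add. apply Nat.mod_small; auto. Qed.

Lemma divmod_bound m p c : (0 < p)%nat -> (c < m * p)%nat -> (c / p < m)%nat /\ (c mod p < p)%nat /\ c = (c / p * p + c mod p)%nat.
Proof. intros Hp Hc. pose proof (Nat.div_mod_eq c p). pose proof (Nat.mod_upper_bound c p ltac:(lia)).
  split; [|split; [auto|lia]]. destruct (Nat.lt_ge_cases (c / p) m); auto.
  assert (m * p <= c / p * p)%nat by (apply Nat.mul_le_mono_r; auto). lia. Qed.

Lemma flat_sum m p (f : nat -> nat -> R) : (0 < p)%nat ->
  fsum (m * p) (fun c => f (c / p)%nat (c mod p)%nat) = fsum m (fun l => fsum p (fun k => f l k)).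
Proof. intros. rewrite fsum_split. apply fsum_ext; intros l _. apply fsum_ext; intros k Hk.
  destruct (divmod_lk p l k Hk) as [-> ->]. auto. Qed.

Definition msq (e p : nat) (a : nat -> nat -> R) : R := fsum e (fun l => sq p (a l)).
Definition mdot (e p : nat) (a b : nat -> nat -> R) : R := fsum e (fun l => dot p (a l) (b l)).

Lemma CS2 e p a b : (0 < p)%nat -> (mdot e p a b) ^ 2 <= msq e p a * msq e p b.
Proof. intros Hp.
  pose proof (CS (e * p) (fun c => a (c / p)%nat (c mod p)%nat) (fun c => b (c / p)%nat (c mod p)%nat)).
  unfold dot, sq in H. rewrite (flat_sum e p (fun l k => a l k * b l k)) in H by auto.
  rewrite (flat_sum e p (fun l k => a l k ^ 2)) in H by auto.
  rewrite (flat_sum e p (fun l k => b l k ^ 2)) in H by auto. auto. Qed.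

Lemma msq_nonneg e p a : 0 <= msq e p a.
Proof. apply fsum_nonneg; intros; apply sq_nonneg. Qed.

Lemma msq_zero e p a : msq e p a <= 0 -> forall l k, (l < e)%nat -> (k < p)%nat -> a l k = 0.
Proof. intros H l k Hl Hk. assert (sq p (a l) <= 0).
  { pose proof (fsum_nonneg_zero e (fun l => sq p (a l)) (fun l _ => sq_nonneg p (a l)) H l Hl). simpl in H0. lra. }
  apply sq_zero with p; auto. Qed.

Lemma msq_coord e p a l k : (l < e)%nat -> (k < p)%nat -> (a l k) ^ 2 <= msq e p a.
Proof. intros. eapply Rle_trans. apply (fsum_term_le p (fun k => a l k ^ 2)); auto. intros; apply pow2_ge_0.
  apply (fsum_term_le e (fun l => sq p (a l))); auto. intros; apply sq_nonneg. Qed.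

Lemma msq_ext e p a b : (forall l k, (l < e)%nat -> (k < p)%nat -> a l k = b l k) -> msq e p a = msq e p b.
Proof. intros. unfold msq, sq. apply fsum_ext; intros. apply fsum_ext; intros. rewrite H; auto. Qed.

Lemma CV_msq e p (vs : nat -> nat -> nat -> R) v :
  (forall l k, (l < e)%nat -> (k < p)%nat -> Un_cv (fun m => vs m l k) (v l k)) ->
  Un_cv (fun m => msq e p (vs m)) (msq e p v).
Proof. intros. unfold msq. apply (CV_fsum e (fun m l => sq p (vs m l))). intros. apply CV_sq. auto. Qed.

Section Iter.
Context (p n : nat) (x : nat -> nat -> R) (N : (nat -> R) -> R) (gamma : R)
  (E : list (nat * nat)) (w : nat -> R) (rho nu : R).
Context (Hp : (0 < p)%nat) (HN : is_norm p N) (Hgamma : 0 <= gamma) (HE : edges_ok n E)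
  (Hw : forall l, (l < length E)%nat -> 0 < w l)
  (Hray : forall y, Bq E y y <= rho * sq n y) (Hrho0 : 0 <= rho) (Hnu : 0 < nu) (Hnurho : nu * rho < 2).

Let e := length E.

Lemma K1 U : msq e p (Aop E U) <= rho * msq n p U.
Proof.
  unfold msq, sq, Aop. rewrite fsum_swap. rewrite (fsum_swap n p). rewrite <- fsum_scal.
  apply fsum_le. intros k Hk. eapply Rle_trans; [|apply (Hray (fun i => U i k))].
  unfold Bq. apply Req_le. apply fsum_ext; intros; ring.
Qed.

Lemma adjoint' lam U : mdot n p (ama_Delta E lam) U = mdot e p lam (Aop E U).
Proof. unfold mdot, dot. apply adjoint; auto. Qed.

Lemma K2 lam : msq n p (ama_Delta E lam) <= rho * msq e p lam.
Proof.
  set (V := msq n p (ama_Delta E lam)).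
  assert (HV : V = mdot e p lam (Aop E (ama_Delta E lam))).
  { rewrite <- adjoint'. unfold V, msq, mdot. apply fsum_ext; intros. rewrite dot_self. auto. }
  pose proof (CS2 e p lam (Aop E (ama_Delta E lam)) Hp). rewrite <- HV in H.
  pose proof (K1 (ama_Delta E lam)). fold V in H0.
  pose proof (msq_nonneg e p lam). pose proof (msq_nonneg n p (ama_Delta E lam)). fold V in H2.
  destruct H2 as [H2|H2]. 2:{ rewrite <- H2. nra. }
  assert (V ^ 2 <= msq e p lam * (rho * V)). { eapply Rle_trans. apply H. apply Rmult_le_compat_l; auto. }
  nra.
Qed.

Lemma Delta_lin a b i k : ama_Delta E a i k - ama_Delta E b i k = ama_Delta E (fun l k => a l k - b l k) i k.
Proof. rewrite !Delta_eq. rewrite <- fsum_minus. apply fsum_ext; intros; ring. Qed.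

Definition Cl l := C_set p N gamma (w l).

Lemma Cl_conv l : (l < e)%nat -> forall a b s, Cl l a -> Cl l b -> 0 <= s <= 1 -> Cl l (fun k => s * a k + (1 - s) * b k).
Proof. intros Hl a b s Ha Hb Hs. unfold Cl, C_set in *. eapply Rle_trans. apply dn_conv; auto. nra. Qed.

Lemma Cl_proj l y : (l < e)%nat -> is_proj p (Cl l) y (proj p (Cl l) y).
Proof. intros Hl. apply proj_spec. apply (proj_exists p _ (fun _ => gamma * w l * Mn p N)).
  - exists (fun _ => 0). unfold Cl, C_set. apply dn_le; auto. intros. rewrite dot_zero_l.
    specialize (Hw l Hl). nra.
  - intros v Hv k Hk. apply dn_coord; auto.
  - intros vs v Hvs Hc. unfold Cl, C_set. apply (dn_closed p N HN Hp vs); auto.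
Qed.

Definition ystep (lam : nat -> nat -> R) l := fun k => lam l k - nu * ama_g x E lam l k.
Definition Tm lam := ama_step p N gamma w x E nu lam.

Lemma Tm_proj lam l : (l < e)%nat -> is_proj p (Cl l) (ystep lam l) (Tm lam l).
Proof. intros. apply Cl_proj; auto. Qed.

Definition fobj lam := / 2 * msq n p (ama_u x E lam).

Lemma fobj_nonneg lam : 0 <= fobj lam.
Proof. unfold fobj. pose proof (msq_nonneg n p (ama_u x E lam)). lra. Qed.

Lemma g_eq lam l k : ama_g x E lam l k = Aop E (ama_u x E lam) l k.
Proof. reflexivity. Qed.

Lemma descent lam : (forall l, (l < e)%nat -> Cl l (lam l)) ->
  fobj (Tm lam) <= fobj lam - (/ nu - rho / 2) * msq e p (fun l k => Tm lam l k - lam l k).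
Proof.
  intros Hin. set (lp := Tm lam). set (d := fun l k => lp l k - lam l k).
  set (G := mdot e p (ama_g x E lam) d).
  assert (HVI : msq e p d + nu * G <= 0).
  { unfold G, msq, mdot. rewrite <- fsum_scal, <- fsum_plus. rewrite <- (fsum_zero e). apply fsum_le.
    intros l Hl. pose proof (proj_VI p (Cl l) (ystep lam l) (lp l) (Cl_conv l Hl) (Tm_proj lam l Hl) (lam l) (Hin l Hl)).
    assert (Eq : dot p (fun k => ystep lam l k - lp l k) (fun k => lam l k - lp l k) = sq p (d l) + nu * dot p (ama_g x E lam l) (d l)).
    { unfold dot, sq. rewrite <- fsum_scal, <- fsum_plus. apply fsum_ext; intros; unfold ystep, d; ring. }
    cbv beta. lra. }
  assert (Hu : msq n p (ama_u x E lp) = msq n p (ama_u x E lam) + 2 * mdot n p (ama_Delta E d) (ama_u x E lam) + msq n p (ama_Delta E d)).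
  { unfold msq, mdot, sq, dot. rewrite <- fsum_scal, <- !fsum_plus. apply fsum_ext; intros i _.
    rewrite <- fsum_scal, <- !fsum_plus. apply fsum_ext; intros k _. unfold ama_u.
    replace (ama_Delta E d i k) with (ama_Delta E lp i k - ama_Delta E lam i k) by (unfold d; apply Delta_lin). ring. }
  assert (HG : mdot n p (ama_Delta E d) (ama_u x E lam) = G).
  { rewrite adjoint'. unfold G, mdot. apply fsum_ext; intros. apply dot_sym. }
  pose proof (K2 d). unfold fobj. rewrite Hu, HG.
  assert (G <= - msq e p d / nu). { apply Rmult_le_reg_l with nu; auto. replace (nu * (- msq e p d / nu)) with (- msq e p d) by (field; lra). lra. }
  unfold Rdiv in *. fold d. nra.
Qed.

Lemma T_nonexp a b : msq e p (fun l k => Tm a l k - Tm b l k) <= msq e p (fun l k => a l k - b l k).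
Proof.
  set (dl := fun l k => a l k - b l k).
  eapply Rle_trans with (msq e p (fun l k => ystep a l k - ystep b l k)).
  { unfold msq. apply fsum_le. intros l Hl. apply (proj_nonexp p (Cl l)); auto. apply Cl_conv; auto.
    apply Tm_proj; auto. apply Tm_proj; auto. }
  set (V := msq n p (ama_Delta E dl)).
  assert (Hy : msq e p (fun l k => ystep a l k - ystep b l k) =
     msq e p dl - 2 * nu * mdot e p dl (Aop E (ama_Delta E dl)) + nu ^ 2 * msq e p (Aop E (ama_Delta E dl))).
  { unfold msq, mdot, sq, dot. rewrite <- !fsum_scal, <- fsum_minus, <- fsum_plus. apply fsum_ext; intros l _.
    rewrite <- !fsum_scal, <- fsum_minus, <- fsum_plus. apply fsum_ext; intros k _.
    unfold ystep, Aop. rewrite !g_eq. unfold Aop, ama_u.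
    replace (ama_Delta E dl (fst (edge E l)) k) with (ama_Delta E a (fst (edge E l)) k - ama_Delta E b (fst (edge E l)) k) by (unfold dl; apply Delta_lin).
    replace (ama_Delta E dl (snd (edge E l)) k) with (ama_Delta E a (snd (edge E l)) k - ama_Delta E b (snd (edge E l)) k) by (unfold dl; apply Delta_lin).
    unfold dl. ring. }
  rewrite Hy. rewrite <- adjoint'.
  assert (HV : mdot n p (ama_Delta E dl) (ama_Delta E dl) = V).
  { unfold V, mdot, msq. apply fsum_ext; intros. apply dot_self. }
  rewrite HV. pose proof (K1 (ama_Delta E dl)). fold V in H.
  assert (0 <= V) by apply msq_nonneg.
  assert (nu ^ 2 * msq e p (Aop E (ama_Delta E dl)) <= nu ^ 2 * (rho * V)) by (apply Rmult_le_compat_l; auto; apply pow2_ge_0).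
  assert (nu ^ 2 * (rho * V) <= 2 * nu * V). { replace (nu ^ 2 * (rho * V)) with ((nu * rho) * (nu * V)) by ring.
    replace (2 * nu * V) with (2 * (nu * V)) by ring. apply Rmult_le_compat_r. nra. lra. }
  lra.
Qed.

Lemma sq3 a b c : (a + b + c) ^ 2 <= 3 * (a ^ 2 + b ^ 2 + c ^ 2).
Proof. pose proof (pow2_ge_0 (a - b)). pose proof (pow2_ge_0 (b - c)). pose proof (pow2_ge_0 (a - c)). nra. Qed.

Lemma msq_sym a b : msq e p (fun l k => a l k - b l k) = msq e p (fun l k => b l k - a l k).
Proof. unfold msq, sq. apply fsum_ext; intros. apply fsum_ext; intros. ring. Qed.

Lemma conv_main lam0 : exists lb, (forall l, (l < e)%nat -> Cl l (lb l)) /\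
  (forall l k, (l < e)%nat -> (k < p)%nat -> Tm lb l k = lb l k) /\
  (forall l k, (l < e)%nat -> (k < p)%nat -> Un_cv (fun m => ama_lam p N gamma w x E nu lam0 m l k) (lb l k)).
Proof.
  set (mu := fun m => ama_lam p N gamma w x E nu lam0 (S m)).
  assert (HmuS : forall m, mu (S m) = Tm (mu m)) by (intros; reflexivity).
  assert (HinC : forall m l, (l < e)%nat -> Cl l (mu m l)).
  { intros m l Hl. destruct m; apply (Tm_proj _ l Hl). }
  set (c0 := / nu - rho / 2).
  assert (Hc0 : 0 < c0). { unfold c0. assert (rho / 2 * nu < 1) by lra.
    apply Rmult_lt_reg_r with nu; auto. rewrite Rmult_minus_distr_r, Rinv_l by lra. lra. }
  set (r := fun m => msq e p (fun l k => mu (S m) l k - mu m l k)).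
  assert (Hdesc : forall m, fobj (mu (S m)) <= fobj (mu m) - c0 * r m).
  { intros. rewrite HmuS. apply descent. intros; apply HinC; auto. }
  assert (Hr0 : forall m, 0 <= r m) by (intros; apply msq_nonneg).
  destruct (decreasing_cv (fun m => fobj (mu m))) as [Lf HLf].
  { intros m. specialize (Hdesc m). specialize (Hr0 m). nra. }
  { exists 0. intros t [i ->]. unfold opp_seq. pose proof (fobj_nonneg (mu i)). lra. }
  assert (Hrcv : Un_cv r 0).
  { apply (Rabs_squeeze _ (fun m => / c0 * (fobj (mu m) - fobj (mu (S m))))).
    - intros m. rewrite Rminus_0_r, Rabs_pos_eq by auto. specialize (Hdesc m).
      apply Rmult_le_reg_l with c0; auto. rewrite <- Rmult_assoc, Rinv_r by lra. lra.
    - replace 0 with (/ c0 * (Lf - Lf)) by ring. apply CV_scal. apply CV_minus; auto.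
      intros eps Heps. destruct (HLf eps Heps) as [M HM]. exists M. intros. apply HM. lia. }
  destruct (BWd (e * p) (fun m c => mu m (c / p)%nat (c mod p)%nat) (fun c => gamma * w (c / p)%nat * Mn p N))
    as [phi [Hphi [v Hv]]].
  { intros m c Hc. destruct (divmod_bound e p c Hp Hc) as [H1 [H2 _]]. apply dn_coord; auto. apply HinC; auto. }
  set (lb := fun l k => v (l * p + k)%nat).
  assert (Hsub : forall l k, (l < e)%nat -> (k < p)%nat -> Un_cv (fun m => mu (phi m) l k) (lb l k)).
  { intros l k Hl Hk. assert (Hc : (l * p + k < e * p)%nat).
    { assert (l * p + k < l * p + p)%nat by lia. assert (l * p + p <= e * p)%nat. 
      { replace (l * p + p)%nat with (S l * p)%nat by lia. apply Nat.mul_le_mono_r. lia. } lia. }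
    specialize (Hv _ Hc). destruct (divmod_lk p l k Hk) as [E1 E2]. rewrite E1, E2 in Hv. auto. }
  assert (Hs : Un_cv (fun m => msq e p (fun l k => mu (phi m) l k - lb l k)) 0).
  { replace 0 with (msq e p (fun _ _ => 0)). apply (CV_msq e p (fun m l k => mu (phi m) l k - lb l k)).
    intros. replace 0 with (lb l k - lb l k) by ring. apply CV_minus. auto. apply CV_const.
    unfold msq, sq. rewrite (fsum_ext _ _ (fun _ => 0)). apply fsum_zero. intros.
    rewrite (fsum_ext _ _ (fun _ => 0)). apply fsum_zero. intros; ring. }
  set (Z := msq e p (fun l k => Tm lb l k - lb l k)).
  assert (HZ : Z <= 0).
  { apply (CV_ge_const (fun m => 3 * (2 * msq e p (fun l k => mu (phi m) l k - lb l k) + r (phi m))) 0 Z).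
    - replace 0 with (3 * (2 * 0 + 0)) by ring. apply CV_scal. apply CV_plus. apply CV_scal. auto.
      apply CV_subseq; auto.
    - intros m. set (j := phi m).
      assert (A1 : Z <= 3 * (msq e p (fun l k => Tm lb l k - Tm (mu j) l k) + msq e p (fun l k => mu (S j) l k - mu j l k) + msq e p (fun l k => mu j l k - lb l k))).
      { unfold Z, msq. rewrite <- !fsum_plus, <- fsum_scal. apply fsum_le; intros l _.
        unfold sq. rewrite <- !fsum_plus, <- fsum_scal. apply fsum_le; intros k _. rewrite HmuS.
        pose proof (sq3 (Tm lb l k - Tm (mu j) l k) (Tm (mu j) l k - mu j l k) (mu j l k - lb l k)).
        replace (Tm lb l k - Tm (mu j) l k + (Tm (mu j) l k - mu j l k) + (mu j l k - lb l k)) with (Tm lb l k - lb l k) in H by ring.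
        lra. }
      pose proof (T_nonexp lb (mu j)). rewrite (msq_sym lb (mu j)) in H. fold (r j) in A1. lra. }
  assert (Hfix : forall l k, (l < e)%nat -> (k < p)%nat -> Tm lb l k = lb l k).
  { intros l k Hl Hk. pose proof (msq_zero e p _ HZ l k Hl Hk). simpl in H. lra. }
  exists lb. split; [|split; auto].
  { intros l Hl. destruct (Tm_proj lb l Hl) as [HC _]. unfold Cl, C_set in *.
    rewrite (dn_ext p N HN Hp (lb l) (Tm lb l)); auto. intros; symmetry; auto. }
  set (ds := fun m => msq e p (fun l k => mu m l k - lb l k)).
  assert (Hfe : forall m, ds (S m) <= ds m).
  { intros m. unfold ds. rewrite HmuS.
    rewrite (msq_ext e p (fun l k => Tm (mu m) l k - lb l k) (fun l k => Tm (mu m) l k - Tm lb l k)).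
    apply T_nonexp. intros. rewrite Hfix; auto. }
  assert (Hmono : forall a b, (a <= b)%nat -> ds b <= ds a).
  { intros a b Hab. induction Hab. lra. specialize (Hfe m). lra. }
  assert (Hds : Un_cv ds 0).
  { intros eps Heps. destruct (Hs eps Heps) as [M HM]. specialize (HM M (le_n _)).
    exists (phi M). intros m Hm. unfold Rdist in *. rewrite Rminus_0_r in *.
    pose proof (msq_nonneg e p (fun l k => mu m l k - lb l k)). fold (ds m) in H.
    rewrite Rabs_pos_eq in * by (auto; apply msq_nonneg). specialize (Hmono _ _ Hm). fold (ds (phi M)) in HM. lra. }
  intros l k Hl Hk eps Heps.
  destruct (Hds (eps * eps)) as [M HM]. nra.
  exists (S M). intros m Hm. destruct m as [|m]. lia.
  specialize (HM m ltac:(lia)). unfold Rdist in *. rewrite Rminus_0_r in HM.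
  pose proof (msq_coord e p (fun l k => mu m l k - lb l k) l k Hl Hk). fold (ds m) in H.
  rewrite Rabs_pos_eq in HM by apply msq_nonneg. change (ama_lam p N gamma w x E nu lam0 (S m) l k) with (mu m l k).
  simpl in H. unfold Rabs. destruct (Rcase_abs _); nra.
Qed.

Lemma fixed_comp lb : (forall l, (l < e)%nat -> Cl l (lb l)) ->
  (forall l k, (l < e)%nat -> (k < p)%nat -> Tm lb l k = lb l k) ->
  forall l, (l < e)%nat -> dot p (lb l) (fun k => - ama_g x E lb l k) = gamma * w l * N (ama_g x E lb l).
Proof.
  intros HC Hfix l Hl. set (h := fun k => - ama_g x E lb l k).
  assert (HNh : N h = N (ama_g x E lb l)) by (apply (N_opp p N HN)).
  assert (Hwl := Hw l Hl). assert (Hr : 0 <= gamma * w l) by nra.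
  apply Rle_antisym.
  - eapply Rle_trans. apply (dot_le_dn p N HN Hp). rewrite HNh.
    apply Rmult_le_compat_r. apply (N_nonneg p N HN). apply HC; auto.
  - rewrite <- HNh. apply (dual_sup p N HN Hp h); auto. intros m Hm.
    pose proof (proj_VI p (Cl l) (ystep lb l) (Tm lb l) (Cl_conv l Hl) (Tm_proj lb l Hl) m Hm).
    rewrite (dot_ext p _ _ (fun k => nu * h k) (fun k => m k - lb l k)) in H.
    2:{ intros. unfold ystep, h. rewrite Hfix; auto. ring. }
    2:{ intros. rewrite Hfix; auto. }
    rewrite dot_scal_l, dot_minus_r in H. rewrite (dot_sym p h m), (dot_sym p h (lb l)) in H.
    assert (dot p m h - dot p (lb l) h <= 0). { apply Rmult_le_reg_l with nu; auto. lra. } lra.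
Qed.

Definition Qf lb U := / 2 * fsum n (fun i => sqdist p (x i) (U i)) - mdot n p (ama_Delta E lb) U.

Lemma Q_shift lb U : Qf lb U = Qf lb (ama_u x E lb) + / 2 * msq n p (fun i k => U i k - ama_u x E lb i k).
Proof.
  assert (forall V, Qf lb V - / 2 * msq n p (fun i k => V i k - ama_u x E lb i k) =
     fsum n (fun i => fsum p (fun k => / 2 * x i k ^ 2 - / 2 * ama_u x E lb i k ^ 2))).
  { intros V. unfold Qf, mdot, msq, sqdist, sq, dot. rewrite <- !fsum_scal. rewrite <- !fsum_minus.
    apply fsum_ext; intros i _. rewrite <- !fsum_scal, <- !fsum_minus. apply fsum_ext; intros k _. unfold ama_u. field. }
  pose proof (H U). pose proof (H (ama_u x E lb)).
  assert (msq n p (fun i k => ama_u x E lb i k - ama_u x E lb i k) = 0).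
  { unfold msq, sq. rewrite (fsum_ext _ _ (fun _ => 0)). apply fsum_zero. intros.
    rewrite (fsum_ext _ _ (fun _ => 0)). apply fsum_zero. intros; ring. }
  lra.
Qed.

Lemma F_Us lb : (forall l, (l < e)%nat -> Cl l (lb l)) ->
  (forall l k, (l < e)%nat -> (k < p)%nat -> Tm lb l k = lb l k) ->
  Fgamma p n N gamma w x E (ama_u x E lb) = Qf lb (ama_u x E lb).
Proof.
  intros HC Hfix. unfold Fgamma, Qf. rewrite adjoint'.
  assert (gamma * fsum (length E) (fun l => w l * N (fun k => ama_u x E lb (fst (edge E l)) k - ama_u x E lb (snd (edge E l)) k))
     = fsum e (fun l => dot p (lb l) (fun k => - ama_g x E lb l k))).
  { rewrite <- fsum_scal. apply fsum_ext. intros l Hl. rewrite fixed_comp; auto. unfold ama_g. ring. }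
  rewrite H. unfold mdot. rewrite (fsum_ext e _ (fun l => - dot p (lb l) (Aop E (ama_u x E lb) l))). 
  2:{ intros. rewrite dot_opp_r. auto. }
  rewrite (fsum_ext e _ (fun l => -1 * dot p (lb l) (Aop E (ama_u x E lb) l))) by (intros; ring).
  rewrite fsum_scal. ring.
Qed.

Lemma Lag_ge lb : (forall l, (l < e)%nat -> Cl l (lb l)) ->
  forall U V, Qf lb U <= Lagrangian p n N gamma w x E U V lb.
Proof.
  intros HC U V. unfold Lagrangian, Qf. rewrite adjoint'. unfold mdot.
  rewrite (fsum_ext (length E) (fun l => dot p (lb l) (fun k => V l k - (U (fst (edge E l)) k - U (snd (edge E l)) k))) (fun l => dot p (lb l) (V l) - dot p (lb l) (Aop E U l))).
  fold e.
  2:{ intros. unfold dot, Aop. rewrite <- fsum_minus. apply fsum_ext; intros. ring. }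
  rewrite fsum_minus.
  assert (0 <= gamma * fsum e (fun l => w l * N (V l)) + fsum e (fun l => dot p (lb l) (V l))).
  { unfold e.
    rewrite <- fsum_scal, <- fsum_plus. apply fsum_nonneg. intros l Hl.
    pose proof (dot_le_dn p N HN Hp (lb l) (fun k => - V l k)). rewrite dot_opp_r in H.
    rewrite (N_opp p N HN) in H. pose proof (HC l Hl). unfold Cl, C_set in H0.
    pose proof (N_nonneg p N HN (V l)). assert (dual_norm p N (lb l) * N (V l) <= gamma * w l * N (V l)) by (apply Rmult_le_compat_r; auto).
    nra. }
  lra.
Qed.

Lemma F_Lag lb U : Fgamma p n N gamma w x E U = Lagrangian p n N gamma w x E U (Aop E U) lb.
Proof. unfold Fgamma, Lagrangian.
  rewrite (fsum_ext (length E) (fun l => dot p (lb l) (fun k => Aop E U l k - (U (fst (edge E l)) k - U (snd (edge E l)) k))) (fun _ => 0)).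
  - rewrite fsum_zero. unfold Aop. ring.
  - intros l _. rewrite (dot_ext p _ _ (lb l) (fun _ => 0)); [rewrite dot_sym, dot_zero_l; auto | auto | intros; unfold Aop; ring].
Qed.

Lemma primal lb : (forall l, (l < e)%nat -> Cl l (lb l)) ->
  (forall l k, (l < e)%nat -> (k < p)%nat -> Tm lb l k = lb l k) ->
  forall U V, Fgamma p n N gamma w x E (ama_u x E lb) + / 2 * msq n p (fun i k => U i k - ama_u x E lb i k)
      <= Lagrangian p n N gamma w x E U V lb.
Proof. intros HC Hfix U V. rewrite F_Us by auto. rewrite <- Q_shift. apply Lag_ge; auto. Qed.
End Iter.

Lemma AtA_eq p E (Hp : (0 < p)%nat) a b : AtA p E a b = LkronI p E a b.
Proof.
  unfold AtA, Amat, LkronI, Lap.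
  pose proof (flat_sum (length E) p (fun l k => Phi E l (a / p) * kdelta k (a mod p) * (Phi E l (b / p) * kdelta k (b mod p))) Hp) as H.
  cbv beta in H. rewrite H. rewrite Rmult_comm, <- fsum_scal. apply fsum_ext. intros l _.
  rewrite (fsum_ext p _ (fun k => kdelta k (a mod p) * (Phi E l (a / p) * (Phi E l (b / p) * kdelta k (b mod p))))) by (intros; ring).
  rewrite fsum_delta by (apply Nat.mod_upper_bound; lia). rewrite kdelta_sym. ring.
Qed.

Lemma sum_AtA p n E (Hp : (0 < p)%nat) a (V : nat -> R) :
  fsum (n * p) (fun b => AtA p E a b * V b) = fsum n (fun j => fsum p (fun k => Lap E (a / p) j * kdelta (a mod p) k * V (j * p + k)%nat)).
Proof.
  rewrite (fsum_ext _ _ (fun b => LkronI p E a b * V b)) by (intros; rewrite AtA_eq; auto).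
  rewrite fsum_split. apply fsum_ext; intros j _. apply fsum_ext; intros k Hk.
  unfold LkronI. destruct (divmod_lk p j k Hk) as [-> ->]. auto.
Qed.

Lemma eig_up p n E (Hp : (0 < p)%nat) mu : is_eigenvalue n (Lap E) mu -> is_eigenvalue (n * p) (AtA p E) mu.
Proof.
  intros [v [[k [Hk Hv]] Hev]].
  exists (fun a => v (a / p)%nat * kdelta (a mod p) 0). split.
  - exists (k * p + 0)%nat. split. assert (k * p + 0 < k * p + p)%nat by lia.
    assert (k * p + p <= n * p)%nat by (replace (k * p + p)%nat with (S k * p)%nat by lia; apply Nat.mul_le_mono_r; lia). lia.
    destruct (divmod_lk p k 0 Hp) as [-> ->]. rewrite kdelta_same. rewrite Rmult_1_r. auto.
  - intros a Ha. rewrite sum_AtA by auto.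
    rewrite (fsum_ext n _ (fun j => kdelta (a mod p) 0 * (Lap E (a / p) j * v j))).
    rewrite fsum_scal. rewrite Hev. ring.
    destruct (divmod_bound n p a Hp Ha); auto.
    intros j _. rewrite (fsum_ext p _ (fun k => kdelta k 0 * (Lap E (a / p) j * v j * kdelta (a mod p) k))).
    rewrite fsum_delta by auto. ring.
    intros k0 Hk0. destruct (divmod_lk p j k0 Hk0) as [-> ->]. ring.
Qed.

Lemma eig_down p n E (Hp : (0 < p)%nat) mu : is_eigenvalue (n * p) (AtA p E) mu -> is_eigenvalue n (Lap E) mu.
Proof.
  intros [V [[a0 [Ha0 HV]] Hev]].
  set (k0 := (a0 mod p)%nat).
  destruct (divmod_bound n p a0 Hp Ha0) as [H1 [H2 H3]].
  exists (fun i => V (i * p + k0)%nat). split.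
  - exists (a0 / p)%nat. split; auto. unfold k0. rewrite <- H3. auto.
  - intros i Hi. assert (Hc : (i * p + k0 < n * p)%nat).
    { assert (i * p + k0 < i * p + p)%nat by lia.
      assert (i * p + p <= n * p)%nat by (replace (i * p + p)%nat with (S i * p)%nat by lia; apply Nat.mul_le_mono_r; lia). lia. }
    specialize (Hev _ Hc). rewrite sum_AtA in Hev by auto.
    destruct (divmod_lk p i k0 H2) as [E1 E2]. rewrite E1, E2 in Hev. rewrite <- Hev.
    apply fsum_ext. intros j _.
    rewrite (fsum_ext p _ (fun k => kdelta k k0 * (Lap E i j * V (j * p + k)%nat))).
    rewrite fsum_delta by auto. auto.
    intros; rewrite kdelta_sym; ring.
Qed.

Theorem mainTheorem7
  (p n : nat) (x : nat -> nat -> R) (N : (nat -> R) -> R) (gamma : R)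
  (E : list (nat * nat)) (w : nat -> R) (rho nu : R) (lam0 : nat -> nat -> R)
  (Hp : (0 < p)%nat)
  (HN : is_norm p N)
  (Hgamma : 0 <= gamma)
  (HEnodup : NoDup E)
  (HE : forall e, In e E -> (fst e < snd e)%nat /\ (snd e < n)%nat)
  (Hw : forall l, (l < length E)%nat -> 0 < w l)
  (Hrho : is_largest_eigenvalue n (Lap E) rho)
  (Hnu : 0 < nu /\ nu < 2 / rho) :
  (forall a b, (a < n * p)%nat -> (b < n * p)%nat -> AtA p E a b = LkronI p E a b) /\
  is_largest_eigenvalue (n * p) (AtA p E) rho /\
  exists Ustar : nat -> nat -> R,
    is_minimizer p n N gamma w x E Ustar /\
    (forall U, is_minimizer p n N gamma w x E U ->
       forall i k, (i < n)%nat -> (k < p)%nat -> U i k = Ustar i k) /\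
    (forall i k, (i < n)%nat -> (k < p)%nat ->
       Un_cv (fun m => ama_U p N gamma w x E nu lam0 m i k) (Ustar i k)) /\
    exists Lstar : nat -> nat -> R,
      is_opt_dual p n N gamma w x E Lstar /\
      (forall l k, (l < length E)%nat -> (k < p)%nat ->
         Un_cv (fun m => ama_lam p N gamma w x E nu lam0 m l k) (Lstar l k)).
Proof.
  assert (HEo : edges_ok n E) by (apply edges_ok_of; auto).
  destruct Hnu as [Hnu Hnu2].
  pose proof (rayleigh n E HEo rho Hrho) as Hray.
  pose proof (rho_nonneg n E HEo rho (proj1 Hrho)) as Hrho0.
  assert (Hnurho : nu * rho < 2).
  { destruct Hrho0 as [Hr|Hr]. apply Rmult_lt_compat_r with (r := rho) in Hnu2; auto.
    replace (2 / rho * rho) with 2 in Hnu2 by (field; lra). auto. rewrite <- Hr. lra. }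
  split; [intros; apply AtA_eq; auto|].
  split.
  { destruct Hrho as [Hr1 Hr2]. split. apply eig_up; auto. intros mu Hmu. apply Hr2. apply eig_down with p; auto. }
  destruct (conv_main p n x N gamma E w rho nu Hp HN Hgamma HEo Hw Hray Hrho0 Hnu Hnurho lam0) as [lb [HC [Hfix Hcv]]].
  pose proof (primal p n x N gamma E w nu Hp HN Hgamma HEo Hw Hnu lb HC Hfix) as Hpr.
  set (Us := ama_u x E lb).
  assert (Hmin : forall U, Fgamma p n N gamma w x E Us + / 2 * msq n p (fun i k => U i k - Us i k) <= Fgamma p n N gamma w x E U).
  { intros U. rewrite (F_Lag p n x N gamma E w lb U). apply Hpr. }
  assert (HUs : is_minimizer p n N gamma w x E Us).
  { intros U'. specialize (Hmin U'). pose proof (msq_nonneg n p (fun i k => U' i k - Us i k)). lra. }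
  exists Us. split; [auto|]. split.
  { intros U HU i k Hi Hk. specialize (HU Us). specialize (Hmin U).
    pose proof (msq_nonneg n p (fun i k => U i k - Us i k)).
    assert (msq n p (fun i k => U i k - Us i k) <= 0) by lra.
    pose proof (msq_zero n p _ H0 i k Hi Hk). simpl in H1. lra. }
  split.
  { intros i k Hi Hk. unfold ama_U, Us, ama_u. apply CV_plus. apply CV_const.
    apply (CV_ext (fun m => fsum (length E) (fun l => (kdelta i (fst (edge E l)) - kdelta i (snd (edge E l))) * ama_lam p N gamma w x E nu lam0 m l k))).
    intros; rewrite Delta_eq; auto. rewrite Delta_eq.
    apply (CV_fsum (length E) (fun m l => (kdelta i (fst (edge E l)) - kdelta i (snd (edge E l))) * ama_lam p N gamma w x E nu lam0 m l k)).
    intros l Hl. apply CV_scal. apply Hcv; auto. }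
  exists lb. split; auto.
  intros U0 HU0 U V. specialize (HU0 Us). specialize (Hpr U V).
  pose proof (msq_nonneg n p (fun i k => U i k - Us i k)). fold Us in Hpr. lra.
Qed.
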